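(* Let $n$ be a positive integer and $m$ an integer. Put $\delta_m=1+(-1)^{m-1}$; for a polynomial $P$ let $\widehat{P}$ denote the sum of the terms of $P$ of odd degree and $\overline{P}=P-\delta_m\widehat{P}$. Then for $-\pi<\arg\zeta<\pi$, $$\begin{aligned}S_{-n-1,-n}(\zeta\mathrm{e}^{-m\pi i})&=(-1)^{mn}S_{-n-1,-n}(\zeta)+\frac{(-1)^{(m+1)n}}{2^nn!}\zeta^{-n}\Big\{-\delta_m\big[\widehat{A}_n(\zeta)+\widehat{B}_n(\zeta)S_{-1,0}(\zeta)+\zeta\widehat{C}_n(\zeta)S'_{-1,0}(\zeta)\big]\\&\quad+\overline{B}_n(\zeta)\big[K''_+H^{(1)}_0(\zeta)+K''_-H^{(2)}_0(\zeta)\big]-\zeta\overline{C}_n(\zeta)\big[K''_+H^{(1)}_1(\zeta)+K''_-H^{(2)}_1(\zeta)\big]\Big\},\end{aligned}$$ where $K''_\pm=-\frac{m\pi^2(m\pm1)}{4}$.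
   Context: $H^{(1)}_\nu=J_\nu+iY_\nu$, $H^{(2)}_\nu=J_\nu-iY_\nu$ are Hankel functions ($J_\nu,Y_\nu$ Bessel functions of first and second kinds); $\psi=\Gamma'/\Gamma$. $S_{-1,0}(\zeta)=\frac12\sum_{k\ge0}\frac{(-1)^k(\zeta/2)^{2k}}{(k!)^2}\big\{[\log\frac{\zeta}{2}-\psi(k+1)]^2-\frac12\psi'(k+1)+\frac{\pi^2}{4}\big\}$ and the Lommel function $S_{-n-1,-n}(\zeta)=\frac{(-1)^n\zeta^n}{n!}\frac{d^n}{d(\zeta^2)^n}S_{-1,0}(\zeta)$. The polynomials $A_n,B_n,C_n$ are defined by $A_1=B_1=0$, $C_1=1$ and for $n\ge2$: $A_n=-2(n-1)A_{n-1}+\zeta A'_{n-1}+C_{n-1}$, $B_n=-2(n-1)B_{n-1}+\zeta B'_{n-1}-\zeta^2C_{n-1}$, $C_n=-2(n-1)C_{n-1}+B_{n-1}+\zeta C'_{n-1}$; with them, $S_{-n-1,-n}(\zeta)=\frac{(-1)^n\zeta^{-n}}{2^nn!}\big[A_n(\zeta)+B_n(\zeta)S_{-1,0}(\zeta)+\zeta C_n(\zeta)S'_{-1,0}(\zeta)\big]$. Right-hand side functions are on the principal branch $-\pi<\arg\zeta<\pi$; $g(\zeta\mathrm{e}^{-m\pi i})$ is the value of the analytic continuation of the principal branch at the point over $\zeta$ with argument $\arg\zeta-m\pi$. *)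

(* Defs.v *)
From Stdlib Require Import Reals ZArith List ClassicalEpsilon.
From Coquelicot Require Import Coquelicot.
Import ListNotations.
Open Scope R_scope.

Definition Cexp (w : C) : C :=
  (exp (Re w) * cos (Im w), exp (Re w) * sin (Im w)).

Fixpoint Cpown (z : C) (n : nat) : C :=
  match n with O => RtoC 1 | S k => Cmult z (Cpown z k) end.

Definition CSeries (a : nat -> C) : C :=
  (Series (fun k => Re (a k)), Series (fun k => Im (a k))).

Fixpoint harm (k : nat) : R :=
  match k with O => 0 | S j => harm j + / INR (S j) end.

Definition euler_gamma : R := real (Lim_seq (fun n => harm n - ln (INR n))).

(* psi (k+1) = -gamma + H_k *)
Definition psi1 (k : nat) : R := - euler_gamma + harm k.
(* psi' (k+1) = sum_{j>=0} 1/(k+1+j)^2 *)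
Definition dpsi1 (k : nat) : R := Series (fun j => / (INR (k + 1 + j)) ^ 2).

(* ---------- functions on the Riemann surface of log ----------
   A point of the surface over zeta with argument theta is encoded by
   w = ln|zeta| + i theta; so zeta = Cexp w and log zeta = w.
   The principal branch at zeta (-pi < arg zeta < pi) is the value at w with
   -pi < Im w < pi, and g(zeta e^{-m pi i}) is the value at w - m pi i. *)

Local Open Scope C_scope.

Definition kf (k : nat) : C := RtoC (INR (fact k)).

Definition J0 (w : C) : C :=
  CSeries (fun k => RtoC ((-1) ^ k) * Cpown (Cexp w / RtoC 2) (2 * k) / (kf k * kf k)).

Definition J1 (w : C) : C :=
  CSeries (fun k => RtoC ((-1) ^ k) * Cpown (Cexp w / RtoC 2) (2 * k + 1)
                     / (kf k * kf (k + 1))).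

Definition Y0 (w : C) : C :=
  RtoC (2 / PI) *
  CSeries (fun k => RtoC ((-1) ^ k) * Cpown (Cexp w / RtoC 2) (2 * k) / (kf k * kf k)
                     * (w - RtoC (ln 2) - RtoC (psi1 k))).

Definition Y1 (w : C) : C :=
  - (RtoC (2 / PI) / Cexp w)
  + RtoC (2 / PI) * (w - RtoC (ln 2)) * J1 w
  - RtoC (1 / PI) *
    CSeries (fun k => RtoC ((-1) ^ k) * RtoC (psi1 k + psi1 (k + 1))
                       * Cpown (Cexp w / RtoC 2) (2 * k + 1) / (kf k * kf (k + 1))).

Definition H1_0 (w : C) : C := J0 w + Ci * Y0 w.
Definition H2_0 (w : C) : C := J0 w - Ci * Y0 w.
Definition H1_1 (w : C) : C := J1 w + Ci * Y1 w.
Definition H2_1 (w : C) : C := J1 w - Ci * Y1 w.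

Definition S10 (w : C) : C :=
  RtoC (1 / 2) *
  CSeries (fun k => RtoC ((-1) ^ k) * Cpown (Cexp w / RtoC 2) (2 * k) / (kf k * kf k)
     * ((w - RtoC (ln 2) - RtoC (psi1 k)) * (w - RtoC (ln 2) - RtoC (psi1 k))
        - RtoC (dpsi1 k / 2) + RtoC (PI ^ 2 / 4))).

(* derivative on the surface with respect to the local coordinate `coord`
   (coord = zeta = Cexp for d/dzeta, coord = zeta^2 for d/d(zeta^2)) *)
Definition has_coord_deriv (coord f : C -> C) (w l : C) : Prop :=
  forall eps : R, 0 < eps -> exists delta : R, 0 < delta /\
    forall w' : C, 0 < Cmod (w' - w) < delta ->
      Cmod ((f w' - f w) / (coord w' - coord w) - l) < eps.

Definition coord_deriv (coord f : C -> C) (w : C) : C :=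
  epsilon (inhabits (RtoC 0)) (fun l => has_coord_deriv coord f w l).

Definition dS10 (w : C) : C := coord_deriv Cexp S10 w.

Fixpoint iterD2 (n : nat) (g : C -> C) : C -> C :=
  match n with
  | O => g
  | S k => coord_deriv (fun v => Cexp v * Cexp v) (iterD2 k g)
  end.

Definition Lommel (n : nat) (w : C) : C :=
  RtoC ((-1) ^ n) * Cpown (Cexp w) n / kf n * iterD2 n S10 w.

Local Close Scope C_scope.

(* ---------- polynomials with real coefficients, as coefficient lists
   (constant term first) ---------- *)
Fixpoint padd (p q : list R) : list R :=
  match p, q with
  | [], _ => q
  | _, [] => p
  | a :: p', b :: q' => (a + b) :: padd p' q'
  end.

Definition pscale (c : R) (p : list R) : list R := map (Rmult c) p.

Definition pX (p : list R) : list R := 0 :: p.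

(* zeta * P'(zeta): coefficient k becomes k * c_k *)
Fixpoint pxd_aux (k : nat) (p : list R) : list R :=
  match p with [] => [] | a :: p' => (INR k * a) :: pxd_aux (S k) p' end.
Definition pxd (p : list R) : list R := pxd_aux 0 p.

Fixpoint phat_aux (k : nat) (p : list R) : list R :=
  match p with [] => [] | a :: p' => (if Nat.odd k then a else 0) :: phat_aux (S k) p' end.
Definition phat (p : list R) : list R := phat_aux 0 p.

Definition pbar (delta : R) (p : list R) : list R := padd p (pscale (- delta) (phat p)).

Definition peval (p : list R) (z : C) : C :=
  fold_right (fun a acc => Cplus (RtoC a) (Cmult z acc)) (RtoC 0) p.

(* ABC n = (A_n, B_n, C_n) for n >= 1 (value at n = 0 irrelevant) *)
Fixpoint ABC (n : nat) : list R * list R * list R :=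
  match n with
  | O => ([], [], [1])
  | S O => ([], [], [1])
  | S k =>
      let '(a, b, c) := ABC k in
      (padd (pscale (-2 * INR k) a) (padd (pxd a) c),
       padd (pscale (-2 * INR k) b) (padd (pxd b) (pscale (-1) (pX (pX c)))),
       padd (pscale (-2 * INR k) c) (padd b (pxd c)))
  end.

Definition polyA (n : nat) : list R := fst (fst (ABC n)).
Definition polyB (n : nat) : list R := snd (fst (ABC n)).
Definition polyC (n : nat) : list R := snd (ABC n).

(* Main.v *)
Require Import Defs.
From Stdlib Require Import Reals ZArith List Lra Lia ClassicalEpsilon FunctionalExtensionality PropExtensionality.
From Coquelicot Require Import Coquelicot.
Import ListNotations.
Open Scope R_scope.

Close Scope C_scope. Open Scope R_scope.
Open Scope R_scope.

Lemma taylor2 (f f' f'' : R -> R) (M x : R) :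
  (forall t, is_derive f t (f' t)) -> (forall t, is_derive f' t (f'' t)) ->
  (forall t, Rabs t <= Rabs x -> Rabs (f'' t) <= M) ->
  Rabs (f x - f 0 - f' 0 * x) <= M * x ^ 2.
Proof.
  intros Hf Hf' HM.
  set (g := fun t => f t - f' 0 * t).
  assert (Hg : forall t, is_derive g t (f' t - f' 0)).
  { intro t. unfold g. apply (is_derive_minus f (fun t => f' 0 * t)). apply Hf.
    auto_derive; auto; ring. }
  destruct (MVT_gen g 0 x (fun t => f' t - f' 0)) as [c [Hc Hgc]].
  { intros; apply Hg. }
  { intros. apply continuity_pt_filterlim. apply (ex_derive_continuous (K:=R_AbsRing) g).
    eexists; apply Hg. }
  destruct (MVT_gen f' 0 c f'') as [d [Hd Hfd]].
  { intros; apply Hf'. }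
  { intros. apply continuity_pt_filterlim. apply (ex_derive_continuous (K:=R_AbsRing) f').
    eexists; apply Hf'. }
  unfold g in Hgc.
  replace (f x - f 0 - f' 0 * x) with ((f' c - f' 0) * x) by lra.
  rewrite Hfd.
  assert (Hcx : Rabs c <= Rabs x).
  { unfold Rmin, Rmax in Hc; destruct (Rle_dec 0 x); unfold Rabs;
    repeat destruct Rcase_abs; lra. }
  assert (Hdc : Rabs d <= Rabs c).
  { unfold Rmin, Rmax in Hd; destruct (Rle_dec 0 c); unfold Rabs;
    repeat destruct Rcase_abs; lra. }
  assert (H := HM d ltac:(lra)).
  replace (c - 0) with c by ring.
  rewrite !Rabs_mult.
  assert (Hx2 : x ^ 2 = Rabs x * Rabs x) by (rewrite <- Rabs_mult, Rabs_right; try ring; nra).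
  rewrite Hx2.
  pose proof (Rabs_pos c). pose proof (Rabs_pos x). pose proof (Rabs_pos (f'' d)).
  assert (Rabs (f'' d) * Rabs c <= M * Rabs x) by (apply Rmult_le_compat; lra).
  nra.
Qed.

Close Scope C_scope. Open Scope R_scope.
Open Scope R_scope.

Lemma is_derive_C_of_eps (f : C -> C) (z l : C) :
  (forall eps, 0 < eps -> exists d, 0 < d /\ forall y, Cmod (y - z)%C < d ->
     Cmod (f y - f z - l * (y - z))%C <= eps * Cmod (y - z)%C) ->
  is_derive (K:=C_AbsRing) f z l.
Proof.
  intros H. unfold is_derive, filterdiff. split.
  { apply is_linear_scal_l. }
  intros x Hx.
  assert (Hzx : z = x) by (apply (is_filter_lim_locally_unique (K:=C_AbsRing) (V:=AbsRing_NormedModule C_AbsRing)); exact Hx).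
  subst x.
  intros eps. destruct (H eps (cond_pos eps)) as [d [Hd H1]].
  exists (mkposreal d Hd).
  intros y Hy. change (Cmod (y - z)%C < d) in Hy.
  idtac.
  change (Cmod (f y - f z - (y - z) * l)%C <= eps * Cmod (y - z)%C).
  replace ((y - z) * l)%C with (l * (y - z))%C by ring.
  apply H1. exact Hy.
Qed.

Lemma eps_of_is_derive_C (f : C -> C) (z l : C) :
  is_derive (K:=C_AbsRing) f z l ->
  forall eps, 0 < eps -> exists d, 0 < d /\ forall y, Cmod (y - z)%C < d ->
     Cmod (f y - f z - l * (y - z))%C <= eps * Cmod (y - z)%C.
Proof.
  intros [_ H] eps Heps.
  destruct (H z (fun P HP => HP) (mkposreal eps Heps)) as [e He].
  exists e. split. apply cond_pos. intros y Hy.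
  assert (Hb : ball (M:=AbsRing_UniformSpace C_AbsRing) z e y) by exact Hy.
  specialize (He y Hb).
  change (Cmod (f y - f z - (y - z) * l)%C <= eps * Cmod (y - z)%C) in He.
  replace (l * (y - z))%C with ((y - z) * l)%C by ring. exact He.
Qed.

Open Scope C_scope.

Lemma Cexp_add a b : Cexp (a + b) = Cexp a * Cexp b.
Proof.
  destruct a as [a1 a2], b as [b1 b2]. unfold Cexp, Cmult; simpl.
  rewrite exp_plus, cos_plus, sin_plus.
  apply injective_projections; simpl; ring.
Qed.

Lemma Cexp_0 : Cexp 0 = 1.
Proof.
  unfold Cexp; simpl. rewrite exp_0, cos_0, sin_0.
  apply injective_projections; simpl; ring.
Qed.

Lemma Cmod_Cexp w : Cmod (Cexp w) = exp (Re w).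
Proof.
  unfold Cexp, Cmod; cbn [fst snd].
  replace ((exp (Re w) * cos (Im w)) ^ 2 + (exp (Re w) * sin (Im w)) ^ 2)%R
    with (exp (Re w) ^ 2)%R.
  2:{ assert (Hc := sin2_cos2 (Im w)). unfold Rsqr in Hc. nra. }
  apply sqrt_pow2. left; apply exp_pos.
Qed.

Lemma Cexp_neq0 w : Cexp w <> 0.
Proof.
  intro H. assert (H1 := Cmod_Cexp w). rewrite H, Cmod_0 in H1.
  assert (H2 := exp_pos (Re w)). lra.
Qed.

Lemma im_le_Cmod c : (Rabs (Im c) <= Cmod c)%R.
Proof.
  assert (H := Cmod2_alt c). assert (H0 := Cmod_ge_0 c).
  apply Rsqr_le_abs_1 in H0 || idtac.
  rewrite <- (Rabs_right (Cmod c)) by lra.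
  apply Rsqr_le_abs_0. unfold Rsqr. simpl in H. nra.
Qed.

Lemma Cmod_le_ReIm c : (Cmod c <= Rabs (Re c) + Rabs (Im c))%R.
Proof.
  assert (H := Cmod2_alt c). assert (H0 := Cmod_ge_0 c).
  pose proof (Rabs_pos (Re c)). pose proof (Rabs_pos (Im c)).
  assert (HR : (Re c ^ 2 = Rabs (Re c) ^ 2)%R) by (rewrite pow2_abs; reflexivity).
  assert (HI : (Im c ^ 2 = Rabs (Im c) ^ 2)%R) by (rewrite pow2_abs; reflexivity).
  nra.
Qed.

Lemma Cexp_taylor h : (Cmod h <= 1)%R -> (Cmod (Cexp h - 1 - h) <= 17 * Cmod h ^ 2)%R.
Proof.
  intros Hh. destruct h as [a b].
  assert (Ha : (Rabs a <= Cmod (a, b))%R) by apply (re_le_Cmod (a, b)).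
  assert (Hb : (Rabs b <= Cmod (a, b))%R) by apply (im_le_Cmod (a, b)).
  set (c := Cmod (a, b)) in *.
  assert (He : (Rabs (exp a - exp 0 - exp 0 * a) <= 3 * a ^ 2)%R).
  { apply (taylor2 exp exp exp).
    - intro; apply is_derive_exp. - intro; apply is_derive_exp.
    - intros t Ht. rewrite Rabs_right by (left; apply exp_pos).
      apply Rle_trans with (exp 1). 2: apply exp_le_3.
      assert (Ht1 : (t <= 1)%R) by (unfold Rabs in *; destruct (Rcase_abs t), (Rcase_abs a); lra).
      destruct (Rle_lt_or_eq_dec t 1 Ht1) as [H|H].
      left; apply exp_increasing; lra. rewrite H; lra. }
  assert (Hco : (Rabs (cos b - cos 0 - (- sin 0) * b) <= 1 * b ^ 2)%R).
  { apply (taylor2 cos (fun t => - sin t) (fun t => - cos t))%R.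
    - intro; apply is_derive_cos. - intro t. auto_derive; auto. ring.
    - intros t _. rewrite Rabs_Ropp. apply Rabs_le. apply COS_bound. }
  assert (Hsi : (Rabs (sin b - sin 0 - cos 0 * b) <= 1 * b ^ 2)%R).
  { apply (taylor2 sin cos (fun t => - sin t))%R.
    - intro; apply is_derive_sin. - intro; apply is_derive_cos.
    - intros t _. rewrite Rabs_Ropp. apply Rabs_le. apply SIN_bound. }
  rewrite exp_0 in He. rewrite cos_0, sin_0 in Hco. rewrite sin_0, cos_0 in Hsi.
  eapply Rle_trans. apply Cmod_le_ReIm.
  unfold Cexp; simpl.
  set (E := exp a) in *. set (Co := cos b) in *. set (Si := sin b) in *.
  replace (E * Co + - (1) + - a)%R with ((E - 1 - a) + E * (Co - 1))%R by ring.
  replace (E * Si + - (0) + - b)%R with ((E - 1) * Si + (Si - b))%R by ring.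
  assert (H1 : (Rabs (E - 1 - a) <= 3 * c ^ 2)%R).
  { replace (E - 1 - a)%R with (E - 1 - 1 * a)%R by ring.
    eapply Rle_trans; [exact He|]. assert (a ^ 2 <= c ^ 2)%R.
    { rewrite <- (pow2_abs a). apply pow_incr. split; [apply Rabs_pos|lra]. } lra. }
  assert (HE1 : (Rabs (E - 1) <= 4 * c)%R).
  { replace (E - 1)%R with ((E - 1 - a) + a)%R by ring.
    eapply Rle_trans. apply Rabs_triang. assert (c ^ 2 <= c)%R.
    { pose proof (Cmod_ge_0 (a,b)) as Hc0; fold c in Hc0; nra. } lra. }
  assert (HEp : (0 < E)%R) by apply exp_pos.
  assert (HE : (E <= 5)%R).
  { unfold Rabs in HE1; destruct Rcase_abs in HE1; pose proof (Cmod_ge_0 (a,b)) as Hc0; fold c in Hc0; lra. }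
  assert (Hb2 : (b ^ 2 <= c ^ 2)%R).
  { rewrite <- (pow2_abs b). apply pow_incr. split; [apply Rabs_pos|lra]. }
  assert (H2 : (Rabs (Co - 1) <= c ^ 2)%R).
  { replace (Co - 1)%R with (Co - 1 - - 0 * b)%R by ring. lra. }
  assert (H3 : (Rabs (Si - b) <= c ^ 2)%R).
  { replace (Si - b)%R with (Si - 0 - 1 * b)%R by ring. lra. }
  assert (H4 : (Rabs Si <= 2 * c)%R).
  { replace Si with ((Si - b) + b)%R by ring. eapply Rle_trans. apply Rabs_triang.
    assert (c ^ 2 <= c)%R. { pose proof (Cmod_ge_0 (a,b)) as Hc0; fold c in Hc0; nra. } lra. }
  pose proof (Cmod_ge_0 (a,b)) as Hc0; fold c in Hc0.
  assert (R1 : (Rabs ((E - 1 - a) + E * (Co - 1)) <= 8 * c ^ 2)%R).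
  { eapply Rle_trans. apply Rabs_triang. rewrite Rabs_mult, (Rabs_right E) by lra.
    assert (E * Rabs (Co - 1) <= 5 * c ^ 2)%R.
    { apply Rle_trans with (5 * Rabs (Co - 1))%R. apply Rmult_le_compat_r. apply Rabs_pos. lra. lra. }
    lra. }
  assert (R2 : (Rabs ((E - 1) * Si + (Si - b)) <= 9 * c ^ 2)%R).
  { eapply Rle_trans. apply Rabs_triang. rewrite Rabs_mult.
    assert (Rabs (E - 1) * Rabs Si <= 4 * c * (2 * c))%R.
    { apply Rmult_le_compat; try apply Rabs_pos; lra. }
    lra. }
  
  lra.
Qed.

Lemma is_derive_Cexp w : is_derive (K:=C_AbsRing) Cexp w (Cexp w).
Proof.
  apply is_derive_C_of_eps. intros eps Heps.
  set (M := Cmod (Cexp w)).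
  assert (HM : (0 <= M)%R) by apply Cmod_ge_0.
  exists (Rmin 1 (eps / (17 * M + 1))). split.
  { apply Rmin_pos. lra. apply Rdiv_lt_0_compat; lra. }
  intros y Hy.
  replace (Cexp y - Cexp w - Cexp w * (y - w)) with (Cexp w * (Cexp (y - w) - 1 - (y - w))).
  2:{ assert (Hy' : Cexp y = Cexp w * Cexp (y - w)) by (rewrite <- Cexp_add; f_equal; ring).
       rewrite Hy'. ring. }
  rewrite Cmod_mult. fold M.
  set (h := (y - w)) in *.
  assert (H1 : (Cmod h <= 1)%R) by (apply Rlt_le, Rlt_le_trans with (1 := Hy), Rmin_l).
  assert (H2 : (Cmod h <= eps / (17 * M + 1))%R) by (apply Rlt_le, Rlt_le_trans with (1 := Hy), Rmin_r).
  assert (H3 := Cexp_taylor h H1).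
  pose proof (Cmod_ge_0 h).
  assert (H4 : (Cmod h * (17 * M + 1) <= eps)%R).
  { apply Rmult_le_reg_r with (/ (17 * M + 1))%R. apply Rinv_0_lt_compat; lra.
    rewrite Rmult_assoc, Rinv_r by lra. unfold Rdiv in H2. lra. }
  apply Rle_trans with (M * (17 * Cmod h ^ 2))%R.
  apply Rmult_le_compat_l; auto.
  simpl. nra.
Qed.

Close Scope C_scope. Open Scope R_scope.
Open Scope R_scope.

Definition ACV (u : nat -> C) := ex_series (fun k => Cmod (u k)).

Lemma ex_series_R_le (a b : nat -> R) :
  (forall n, Rabs (a n) <= b n) -> ex_series b -> ex_series a.
Proof. intros H Hb. apply (ex_series_le (V:=R_CompleteNormedModule) a b); auto. Qed.

Lemma ACV_Re u : ACV u -> ex_series (fun k => Re (u k)).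
Proof. intro H. apply (ex_series_R_le _ _ (fun k => re_le_Cmod (u k)) H). Qed.
Lemma ACV_Im u : ACV u -> ex_series (fun k => Im (u k)).
Proof. intro H. apply (ex_series_R_le _ _ (fun k => im_le_Cmod (u k)) H). Qed.
Lemma ACV_aRe u : ACV u -> ex_series (fun k => Rabs (Re (u k))).
Proof. intro H. apply (ex_series_R_le _ _ (fun k => Rle_trans _ _ _ (Req_le _ _ (Rabs_Rabsolu _)) (re_le_Cmod (u k))) H). Qed.
Lemma ACV_aIm u : ACV u -> ex_series (fun k => Rabs (Im (u k))).
Proof. intro H. apply (ex_series_R_le _ _ (fun k => Rle_trans _ _ _ (Req_le _ _ (Rabs_Rabsolu _)) (im_le_Cmod (u k))) H). Qed.

Lemma ACV_le u (b : nat -> R) : (forall k, Cmod (u k) <= b k) -> ex_series b -> ACV u.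
Proof.
  intros H Hb. apply (ex_series_R_le _ b); auto. intro n. rewrite Rabs_pos_eq by apply Cmod_ge_0. auto.
Qed.

Lemma ACV_plus u v : ACV u -> ACV v -> ACV (fun k => (u k + v k)%C).
Proof.
  intros Hu Hv. apply ACV_le with (fun k => Cmod (u k) + Cmod (v k)).
  intro; apply Cmod_triangle. apply (ex_series_plus (V:=R_NormedModule)); auto.
Qed.

Lemma ACV_scal c u : ACV u -> ACV (fun k => (c * u k)%C).
Proof.
  intros Hu. apply ACV_le with (fun k => Cmod c * Cmod (u k)).
  intro; rewrite Cmod_mult; lra. apply (ex_series_scal (V:=R_NormedModule)); auto.
Qed.

Lemma ACV_opp u : ACV u -> ACV (fun k => (- u k)%C).
Proof.
  intros Hu. apply ACV_le with (fun k => Cmod (u k)). intro; rewrite Cmod_opp; lra. auto.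
Qed.

Lemma ACV_ext u v : (forall k, u k = v k) -> ACV u -> ACV v.
Proof. intros H Hu. apply ACV_le with (fun k => Cmod (u k)). intro; rewrite H; lra. auto. Qed.

Lemma CSeries_ext u v : (forall k, u k = v k) -> CSeries u = CSeries v.
Proof.
  intros H. unfold CSeries. f_equal; apply Series_ext; intro; rewrite H; auto.
Qed.

Lemma CSeries_plus u v : ACV u -> ACV v ->
  CSeries (fun k => (u k + v k)%C) = (CSeries u + CSeries v)%C.
Proof.
  intros Hu Hv. unfold CSeries. apply injective_projections; simpl.
  - rewrite <- Series_plus by (apply ACV_Re; auto). apply Series_ext; intro; reflexivity.
  - rewrite <- Series_plus by (apply ACV_Im; auto). apply Series_ext; intro; reflexivity.
Qed.

Lemma CSeries_scal c u : ACV u -> CSeries (fun k => (c * u k)%C) = (c * CSeries u)%C.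
Proof.
  intros Hu. unfold CSeries. apply injective_projections; simpl.
  - rewrite <- !Series_scal_l. rewrite <- Series_minus.
    apply Series_ext; intro; reflexivity.
    apply (ex_series_scal (V:=R_NormedModule)); apply ACV_Re; auto.
    apply (ex_series_scal (V:=R_NormedModule)); apply ACV_Im; auto.
  - rewrite <- !Series_scal_l. rewrite <- Series_plus.
    apply Series_ext; intro; reflexivity.
    apply (ex_series_scal (V:=R_NormedModule)); apply ACV_Im; auto.
    apply (ex_series_scal (V:=R_NormedModule)); apply ACV_Re; auto.
Qed.

Lemma CSeries_opp u : ACV u -> CSeries (fun k => (- u k)%C) = (- CSeries u)%C.
Proof.
  intros Hu.
  transitivity (CSeries (fun k => (RtoC (-1) * u k)%C)).
  apply CSeries_ext; intro; ring.
  rewrite CSeries_scal by auto. ring.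
Qed.

Lemma CSeries_minus u v : ACV u -> ACV v ->
  CSeries (fun k => (u k - v k)%C) = (CSeries u - CSeries v)%C.
Proof.
  intros Hu Hv. unfold Cminus. rewrite CSeries_plus, CSeries_opp; auto. apply ACV_opp; auto.
Qed.

Lemma CSeries_incr_1 u : ACV u -> CSeries u = (u 0%nat + CSeries (fun k => u (S k)))%C.
Proof.
  intros Hu. unfold CSeries. apply injective_projections; simpl.
  - rewrite Series_incr_1 by (apply ACV_Re; auto). reflexivity.
  - rewrite Series_incr_1 by (apply ACV_Im; auto). reflexivity.
Qed.

Lemma CSeries_incr_1_aux u : u 0%nat = RtoC 0 -> CSeries u = CSeries (fun k => u (S k)).
Proof.
  intros Hu. unfold CSeries. f_equal; apply Series_incr_1_aux; rewrite Hu; reflexivity.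
Qed.

Lemma ACV_incr_1 u : ACV (fun k => u (S k)) -> ACV u.
Proof. intro H. unfold ACV. apply (ex_series_incr_1 (V:=R_NormedModule)). exact H. Qed.

Lemma Cmod_CSeries u : ACV u -> Cmod (CSeries u) <= 2 * Series (fun k => Cmod (u k)).
Proof.
  intros Hu. eapply Rle_trans. apply Cmod_le_ReIm. unfold CSeries; simpl.
  eapply Rle_trans. apply Rplus_le_compat; apply Series_Rabs.
  apply ACV_aRe; auto. apply ACV_aIm; auto.
  assert (H1 : Series (fun n => Rabs (Re (u n))) <= Series (fun k => Cmod (u k))).
  { apply Series_le; auto. intro; split. apply Rabs_pos. apply re_le_Cmod. }
  assert (H2 : Series (fun n => Rabs (Im (u n))) <= Series (fun k => Cmod (u k))).
  { apply Series_le; auto. intro; split. apply Rabs_pos. apply im_le_Cmod. }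
  lra.
Qed.

Lemma Cmod_Cpown z k : Cmod (Cpown z k) = Cmod z ^ k.
Proof. induction k; simpl. apply Cmod_1. rewrite Cmod_mult, IHk. ring. Qed.

Definition FB (a : nat -> C) := exists M c, 0 <= M /\ 0 <= c /\
  forall k, Cmod (a k) <= M * c ^ k / INR (fact k).

Lemma ex_series_expo x : ex_series (fun k => x ^ k / INR (fact k)).
Proof.
  assert (H := is_exp_Reals x). unfold is_pseries in H.
  exists (exp x). eapply is_series_ext; [|exact H].
  intro n. simpl. rewrite pow_n_pow. unfold scal; simpl. unfold mult; simpl. unfold Rdiv. ring.
Qed.

Lemma FB_ACV a z : FB a -> ACV (fun k => (a k * Cpown z k)%C).
Proof.
  intros [M [c [HM [Hc Ha]]]].
  apply ACV_le with (fun k => M * ((c * Cmod z) ^ k / INR (fact k))).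
  - intro k. rewrite Cmod_mult, Cmod_Cpown. rewrite Rpow_mult_distr.
    eapply Rle_trans. apply Rmult_le_compat_r. apply pow_le, Cmod_ge_0. apply Ha.
    unfold Rdiv. right; ring.
  - apply (ex_series_scal (V:=R_NormedModule)). apply ex_series_expo.
Qed.

Definition CE (a : nat -> C) (z : C) : C := CSeries (fun k => (a k * Cpown z k)%C).
Definition dseq (a : nat -> C) (k : nat) : C := (RtoC (INR (S k)) * a (S k))%C.

Lemma FB_dseq a : FB a -> FB (dseq a).
Proof.
  intros [M [c [HM [Hc Ha]]]]. exists (M * c), c. split. nra. split. auto.
  intro k. unfold dseq. rewrite Cmod_mult, Cmod_R, Rabs_pos_eq by apply pos_INR.
  specialize (Ha (S k)). rewrite fact_simpl, mult_INR in Ha. simpl pow in Ha.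
  assert (HS : 0 < INR (S k)) by (apply lt_0_INR; lia).
  assert (Hf : 0 < INR (fact k)) by (apply lt_0_INR, lt_O_fact).
  apply Rle_trans with (INR (S k) * (M * (c * c ^ k) / (INR (S k) * INR (fact k)))).
  apply Rmult_le_compat_l; lra. right. field. lra.
Qed.

Lemma FB_ext a b : (forall k, a k = b k) -> FB a -> FB b.
Proof. intros H [M [c [H1 [H2 H3]]]]. exists M, c. repeat split; auto. intro k; rewrite <- H; auto. Qed.

Lemma FB_plus a b : FB a -> FB b -> FB (fun k => (a k + b k)%C).
Proof.
  intros [M [c [H1 [H2 H3]]]] [M' [c' [H1' [H2' H3']]]].
  exists (M + M'), (Rmax c c'). split. lra. split. apply Rle_trans with c; auto; apply Rmax_l.
  intro k. eapply Rle_trans. apply Cmod_triangle.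
  assert (Hf : 0 < INR (fact k)) by (apply lt_0_INR, lt_O_fact).
  assert (c ^ k <= Rmax c c' ^ k) by (apply pow_incr; split; auto; apply Rmax_l).
  assert (c' ^ k <= Rmax c c' ^ k) by (apply pow_incr; split; auto; apply Rmax_r).
  specialize (H3 k). specialize (H3' k). unfold Rdiv in *.
  assert (0 < / INR (fact k)) by (apply Rinv_0_lt_compat; auto).
  assert (M * c ^ k * / INR (fact k) <= M * Rmax c c' ^ k * / INR (fact k)).
  { apply Rmult_le_compat_r. lra. apply Rmult_le_compat_l; auto. }
  assert (M' * c' ^ k * / INR (fact k) <= M' * Rmax c c' ^ k * / INR (fact k)).
  { apply Rmult_le_compat_r. lra. apply Rmult_le_compat_l; auto. }
  nra.
Qed.

Lemma FB_scal d a : FB a -> FB (fun k => (d * a k)%C).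
Proof.
  intros [M [c [H1 [H2 H3]]]]. exists (Cmod d * M), c. split.
  apply Rmult_le_pos; auto; apply Cmod_ge_0. split; auto.
  intro k. rewrite Cmod_mult. unfold Rdiv. rewrite !Rmult_assoc. apply Rmult_le_compat_l.
  apply Cmod_ge_0. specialize (H3 k). unfold Rdiv in H3. lra.
Qed.

Lemma FB_mul_bound a (b : nat -> C) K : FB a -> 0 <= K -> (forall k, Cmod (b k) <= K * 2 ^ k) ->
  FB (fun k => (b k * a k)%C).
Proof.
  intros [M [c [H1 [H2 H3]]]] HK Hb. exists (K * M), (2 * c). split. nra. split. lra.
  intro k. rewrite Cmod_mult. rewrite Rpow_mult_distr.
  assert (Hf : 0 < INR (fact k)) by (apply lt_0_INR, lt_O_fact).
  specialize (H3 k). specialize (Hb k).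
  apply Rle_trans with (K * 2 ^ k * (M * c ^ k / INR (fact k))).
  apply Rmult_le_compat; auto; apply Cmod_ge_0.
  right. unfold Rdiv. ring.
Qed.

Lemma pow_poly_bound k : INR k ^ 2 <= 4 ^ k.
Proof.
  induction k. simpl. lra.
  destruct k. simpl. lra.
  rewrite (S_INR (S k)). change (4 ^ S (S k)) with (4 * 4 ^ S k).
  assert (1 <= INR (S k)) by (apply (le_INR 1); lia). nra.
Qed.

Lemma INR_le_pow2 k : INR k <= 2 ^ k.
Proof.
  induction k. simpl; lra. rewrite S_INR. simpl. assert (1 <= 2 ^ k) by (apply pow_R1_Rle; lra). lra.
Qed.

Close Scope C_scope. Open Scope R_scope.
Open Scope R_scope.

Definition Ek (y z : C) (k : nat) : C :=
  (Cpown y k - Cpown z k - RtoC (INR k) * Cpown z (pred k) * (y - z))%C.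

Lemma Ek_rec y z k : Ek y z (S k) = (y * Ek y z k + RtoC (INR k) * Cpown z (pred k) * (y - z) * (y - z))%C.
Proof.
  unfold Ek. destruct k.
  - simpl. ring.
  - simpl pred. simpl Cpown. rewrite (S_INR (S k)). rewrite RtoC_plus. ring.
Qed.

Lemma Ek_bound y z R k : Cmod y <= R -> Cmod z <= R -> 1 <= R ->
  Cmod (Ek y z k) <= INR k ^ 2 * R ^ k * Cmod (y - z)%C ^ 2.
Proof.
  intros Hy Hz HR. induction k.
  - unfold Ek. simpl. replace (1 - 1 - 0 * 1 * (y - z))%C with (RtoC 0) by ring.
    rewrite Cmod_0. lra.
  - rewrite Ek_rec. eapply Rle_trans. apply Cmod_triangle.
    rewrite !Cmod_mult, Cmod_R, Rabs_pos_eq by apply pos_INR. rewrite Cmod_Cpown.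
    set (h := Cmod (y - z)%C). assert (Hh : 0 <= h) by apply Cmod_ge_0.
    assert (Hk : 0 <= INR k) by apply pos_INR.
    assert (HzR : Cmod z ^ pred k <= R ^ S k).
    { apply Rle_trans with (R ^ pred k). apply pow_incr; split; auto; apply Cmod_ge_0.
      apply Rle_pow; auto; lia. }
    assert (HRk : 0 <= R ^ k) by (apply pow_le; lra).
    assert (H1 : Cmod y * Cmod (Ek y z k) <= R * (INR k ^ 2 * R ^ k * h ^ 2)).
    { apply Rmult_le_compat; auto; apply Cmod_ge_0. }
    assert (H2 : INR k * Cmod z ^ pred k * h * h <= INR k * R ^ S k * h * h).
    { repeat apply Rmult_le_compat_r; auto. apply Rmult_le_compat_l; auto. }
    rewrite S_INR. simpl pow in *.
    assert (HT : 0 <= R * R ^ k * (h * h)) by (apply Rmult_le_pos; [apply Rmult_le_pos; lra| nra]).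
    assert (HT2 : (INR k * INR k + INR k) * (R * R ^ k * (h * h)) <= (INR k + 1) * (INR k + 1) * (R * R ^ k * (h * h))) by (apply Rmult_le_compat_r; nra).
    nra.
Qed.

Lemma Series_nonneg (u : nat -> R) : (forall k, 0 <= u k) -> ex_series u -> 0 <= Series u.
Proof.
  intros H Hu.
  assert (H0 : Series (fun _ => 0) = 0).
  { rewrite (Series_ext (fun _ => 0) (fun n => 0 * u n)) by (intro; ring).
    rewrite Series_scal_l. ring. }
  rewrite <- H0. apply Series_le; auto. intro; split; [lra| auto].
Qed.

Lemma CE_dseq_alt a z : CE (dseq a) z =
  CSeries (fun k => (RtoC (INR k) * a k * Cpown z (pred k))%C).
Proof.
  symmetry. rewrite CSeries_incr_1_aux.
  - unfold CE, dseq. apply CSeries_ext. intro k. simpl pred. ring.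
  - simpl. ring.
Qed.

Theorem CE_derive a z : FB a -> is_derive (K:=C_AbsRing) (CE a) z (CE (dseq a) z).
Proof.
  intros Ha. assert (Ha' := Ha). destruct Ha' as [M [c [HM [Hc Hak]]]].
  set (R := Cmod z + 1). assert (HR : 1 <= R) by (unfold R; pose proof (Cmod_ge_0 z); lra).
  set (S0 := Series (fun k => M * ((4 * c * R) ^ k / INR (fact k)))).
  assert (HS0ex : ex_series (fun k => M * ((4 * c * R) ^ k / INR (fact k)))).
  { apply (ex_series_scal (V:=R_NormedModule)). apply ex_series_expo. }
  assert (HS0 : 0 <= S0).
  { apply Series_nonneg; auto. intro k. apply Rmult_le_pos; auto.
    apply Rdiv_le_0_compat. apply pow_le. apply Rmult_le_pos; lra.
    apply lt_0_INR, lt_O_fact. }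
  apply is_derive_C_of_eps. intros eps Heps.
  exists (Rmin 1 (eps / (2 * S0 + 1))). split.
  { apply Rmin_pos. lra. apply Rdiv_lt_0_compat; lra. }
  intros y Hy.
  set (h := (y - z)%C) in *.
  assert (H1 : Cmod h <= 1) by (apply Rlt_le, Rlt_le_trans with (1 := Hy), Rmin_l).
  assert (H2 : Cmod h <= eps / (2 * S0 + 1)) by (apply Rlt_le, Rlt_le_trans with (1 := Hy), Rmin_r).
  assert (HyR : Cmod y <= R).
  { unfold R. replace y with (z + h)%C by (unfold h; ring). eapply Rle_trans. apply Cmod_triangle. lra. }
  assert (HzR : Cmod z <= R) by (unfold R; lra).
  assert (Hb : forall k, Cmod (a k * Ek y z k)%C <= M * ((4 * c * R) ^ k / INR (fact k)) * Cmod h ^ 2).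
  { intro k. rewrite Cmod_mult. specialize (Hak k).
    assert (HE := Ek_bound y z R k HyR HzR HR). fold h in HE.
    assert (Hf : 0 < INR (fact k)) by (apply lt_0_INR, lt_O_fact).
    assert (Hp := pow_poly_bound k).
    eapply Rle_trans. apply Rmult_le_compat; try apply Cmod_ge_0. exact Hak. exact HE.
    rewrite !Rpow_mult_distr. unfold Rdiv.
    assert (0 <= c ^ k) by (apply pow_le; lra). assert (0 <= R ^ k) by (apply pow_le; lra).
    assert (0 <= / INR (fact k)) by (left; apply Rinv_0_lt_compat; auto).
    assert (0 <= Cmod h ^ 2) by (apply pow_le, Cmod_ge_0).
    assert (M * c ^ k * / INR (fact k) * (R ^ k * Cmod h ^ 2) >= 0). { apply Rle_ge; repeat apply Rmult_le_pos. all: auto; try apply Cmod_ge_0; lra. }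
    replace (M * c ^ k * / INR (fact k) * (INR k ^ 2 * R ^ k * Cmod h ^ 2))
      with (INR k ^ 2 * (M * c ^ k * / INR (fact k) * (R ^ k * Cmod h ^ 2))) by ring.
    replace (M * (4 ^ k * c ^ k * R ^ k * / INR (fact k)) * Cmod h ^ 2)
      with (4 ^ k * (M * c ^ k * / INR (fact k) * (R ^ k * Cmod h ^ 2))) by ring.
    apply Rmult_le_compat_r; lra. }
  assert (Hex2 : ex_series (fun k => M * ((4 * c * R) ^ k / INR (fact k)) * Cmod h ^ 2)).
  { apply (ex_series_scal_r). auto. }
  assert (HACV : ACV (fun k => (a k * Ek y z k)%C)) by (apply ACV_le with (1 := Hb); auto).
  assert (Hid : (CE a y - CE a z - CE (dseq a) z * h)%C = CSeries (fun k => (a k * Ek y z k)%C)).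
  { rewrite CE_dseq_alt.
    assert (Hd : ACV (fun k => (RtoC (INR k) * a k * Cpown z (pred k))%C)).
    { apply ACV_incr_1. apply ACV_ext with (fun k => (dseq a k * Cpown z k)%C).
      intro k; unfold dseq; simpl pred; ring. apply FB_ACV, FB_dseq; auto. }
    unfold CE. rewrite <- CSeries_minus by (apply FB_ACV; auto).
    replace (CSeries (fun k => (RtoC (INR k) * a k * Cpown z (pred k))%C) * h)%C
      with (h * CSeries (fun k => (RtoC (INR k) * a k * Cpown z (pred k))%C))%C by ring.
    rewrite <- CSeries_scal by auto.
    rewrite <- CSeries_minus.
    - apply CSeries_ext. intro k. unfold Ek. fold h. ring.
    - apply ACV_ext with (fun k => (a k * Cpown y k - a k * Cpown z k)%C). intro; reflexivity.
      unfold Cminus. apply ACV_plus. apply FB_ACV; auto. apply ACV_opp, FB_ACV; auto.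
    - apply ACV_scal; auto. }
  rewrite Hid.
  eapply Rle_trans. apply Cmod_CSeries; auto.
  assert (Hs : Series (fun k => Cmod (a k * Ek y z k)%C) <= S0 * Cmod h ^ 2).
  { unfold S0. rewrite <- Series_scal_r. apply Series_le; auto. intro k; split. apply Cmod_ge_0. auto. }
  pose proof (Cmod_ge_0 h).
  assert (H4 : Cmod h * (2 * S0 + 1) <= eps).
  { apply Rmult_le_reg_r with (/ (2 * S0 + 1)). apply Rinv_0_lt_compat; lra.
    rewrite Rmult_assoc, Rinv_r by lra. unfold Rdiv in H2. lra. }
  simpl pow in Hs. nra.
Qed.

Close Scope C_scope. Open Scope R_scope.
Open Scope R_scope.

Notation CD f w l := (is_derive (K:=C_AbsRing) (V:=C_NormedModule) f w l).

Lemma CD_eq (f : C -> C) (w l l' : C) : CD f w l -> @eq C l l' -> CD f w l'.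
Proof. intros H ->; auto. Qed.

Lemma CD_ext (f g : C -> C) w l : (forall t, f t = g t) -> CD f w l -> CD g w l.
Proof. intros H H1. apply (is_derive_ext f g w l H H1). Qed.

Lemma CD_const (c : C) w : CD (fun _ => c) w (RtoC 0).
Proof. apply (is_derive_const (K:=C_AbsRing) (V:=C_NormedModule)). Qed.

Lemma CD_id (w : C) : CD (fun t : C => t) w (RtoC 1).
Proof.
  apply is_derive_C_of_eps. intros eps Heps. exists 1. split. lra. intros y Hy.
  replace (y - w - RtoC 1 * (y - w))%C with (RtoC 0) by ring. rewrite Cmod_0.
  pose proof (Cmod_ge_0 (y - w)%C). nra.
Qed.

Lemma CD_plus f g w df dg : CD f w df -> CD g w dg -> CD (fun t => (f t + g t)%C) w (df + dg)%C.
Proof. intros H1 H2. apply (is_derive_plus (K:=C_AbsRing) (V:=C_NormedModule) f g w df dg H1 H2). Qed.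

Lemma CD_opp f w df : CD f w df -> CD (fun t => (- f t)%C) w (- df)%C.
Proof. intros H1. apply (is_derive_opp (K:=C_AbsRing) (V:=C_NormedModule) f w df H1). Qed.

Lemma CD_minus f g w df dg : CD f w df -> CD g w dg -> CD (fun t => (f t - g t)%C) w (df - dg)%C.
Proof. intros H1 H2. unfold Cminus. apply CD_plus; auto. apply CD_opp; auto. Qed.

Lemma isA_of_eps (f : C -> C) (z l : C) :
  (forall eps, 0 < eps -> exists d, 0 < d /\ forall y, Cmod (y - z)%C < d ->
     Cmod (f y - f z - l * (y - z))%C <= eps * Cmod (y - z)%C) ->
  is_derive (K:=C_AbsRing) (V:=AbsRing_NormedModule C_AbsRing) f z l.
Proof.
  intros H. unfold is_derive, filterdiff. split.
  { apply is_linear_scal_l. }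
  intros x Hx.
  assert (Hzx : z = x) by (apply (is_filter_lim_locally_unique (K:=C_AbsRing) (V:=AbsRing_NormedModule C_AbsRing)); exact Hx).
  subst x.
  intros eps. destruct (H eps (cond_pos eps)) as [d [Hd H1]].
  exists (mkposreal d Hd).
  intros y Hy. change (Cmod (y - z)%C < d) in Hy.
  change (Cmod (f y - f z - (y - z) * l)%C <= eps * Cmod (y - z)%C).
  replace ((y - z) * l)%C with (l * (y - z))%C by ring.
  apply H1. exact Hy.
Qed.

Lemma eps_of_isA (f : C -> C) (z l : C) :
  is_derive (K:=C_AbsRing) (V:=AbsRing_NormedModule C_AbsRing) f z l ->
  forall eps, 0 < eps -> exists d, 0 < d /\ forall y, Cmod (y - z)%C < d ->
     Cmod (f y - f z - l * (y - z))%C <= eps * Cmod (y - z)%C.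
Proof.
  intros [_ H] eps Heps.
  destruct (H z (fun P HP => HP) (mkposreal eps Heps)) as [e He].
  exists e. split. apply cond_pos. intros y Hy.
  assert (Hb : ball (M:=AbsRing_UniformSpace C_AbsRing) z e y) by exact Hy.
  specialize (He y Hb).
  change (Cmod (f y - f z - (y - z) * l)%C <= eps * Cmod (y - z)%C) in He.
  replace (l * (y - z))%C with ((y - z) * l)%C by ring. exact He.
Qed.

Lemma CD_mult f g w df dg : CD f w df -> CD g w dg -> CD (fun t => (f t * g t)%C) w (df * g w + f w * dg)%C.
Proof.
  intros H1 H2.
  assert (H1' : is_derive (K:=C_AbsRing) (V:=AbsRing_NormedModule C_AbsRing) f w df)
    by (apply isA_of_eps, eps_of_is_derive_C; exact H1).
  assert (H2' : is_derive (K:=C_AbsRing) (V:=AbsRing_NormedModule C_AbsRing) g w dg)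
    by (apply isA_of_eps, eps_of_is_derive_C; exact H2).
  assert (H := is_derive_mult (K:=C_AbsRing) f g w df dg H1' H2' (fun a b => Cmult_comm a b)).
  apply is_derive_C_of_eps. apply (eps_of_isA (fun t => (f t * g t)%C)). exact H.
Qed.

Lemma CD_scal (c : C) f w df : CD f w df -> CD (fun t => (c * f t)%C) w (c * df)%C.
Proof.
  intros H. eapply CD_eq. apply (CD_mult (fun _ => c) f). apply CD_const. exact H. simpl. ring.
Qed.


Lemma CD_comp (f g : C -> C) (w df dg : C) :
  is_derive (K:=C_AbsRing) (V:=C_NormedModule) f (g w) df ->
  is_derive (K:=C_AbsRing) (V:=C_NormedModule) g w dg ->
  is_derive (K:=C_AbsRing) (V:=C_NormedModule) (fun t => f (g t)) w (dg * df)%C.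
Proof.
  intros H1 H2.
  assert (H2' : is_derive (K:=C_AbsRing) (V:=AbsRing_NormedModule C_AbsRing) g w dg)
    by (apply isA_of_eps, eps_of_is_derive_C; exact H2).
  apply (is_derive_comp (K:=C_AbsRing) (V:=C_NormedModule) f g w df dg H1 H2').
Qed.

Lemma CD_Cexp w : CD Cexp w (Cexp w).
Proof. apply is_derive_Cexp. Qed.

Open Scope C_scope.

Definition q (w : C) : C := (Cexp w / RtoC 2) * (Cexp w / RtoC 2).

Lemma q_eq w : Cexp w * Cexp w = RtoC 4 * q w.
Proof. unfold q. field. Qed.

Lemma CD_q w : CD q w (RtoC 2 * q w).
Proof.
  unfold q. eapply CD_eq. apply CD_mult; (unfold Cdiv; apply (CD_mult Cexp (fun _ => Cinv (RtoC 2))); [apply CD_Cexp| apply CD_const]).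
  cbv beta. field.
Qed.

Definition CEr (a : nat -> R) (z : C) : C := CE (fun k => RtoC (a k)) z.

Definition FBr (a : nat -> R) := exists M c, (0 <= M)%R /\ (0 <= c)%R /\
  forall k, (Rabs (a k) <= M * c ^ k / INR (fact k))%R.

Lemma FBr_FB a : FBr a -> FB (fun k => RtoC (a k)).
Proof. intros [M [c [H1 [H2 H]]]]. exists M, c. split; auto. split; auto. intro k. rewrite Cmod_R. apply H. Qed.

Open Scope R_scope.
Definition tl (a : nat -> R) (k : nat) : R := a (S k).
Definition sh (a : nat -> R) (k : nat) : R := match k with O => 0 | S j => a j end.
Definition nk (a : nat -> R) (k : nat) : R := 2 * INR k * a k.

Lemma fact_pos k : 0 < INR (fact k).
Proof. apply lt_0_INR, lt_O_fact. Qed.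

Lemma FBr_ext a b : (forall k, a k = b k) -> FBr a -> FBr b.
Proof. intros H [M [c [H1 [H2 H3]]]]. exists M, c. repeat split; auto. intro k; rewrite <- H; auto. Qed.

Lemma FBr_plus a b : FBr a -> FBr b -> FBr (fun k => a k + b k).
Proof.
  intros Ha Hb. apply FBr_FB in Ha. apply FBr_FB in Hb.
  destruct (FB_plus _ _ Ha Hb) as [M [c [H1 [H2 H3]]]]. exists M, c. repeat split; auto.
  intro k. specialize (H3 k). rewrite <- RtoC_plus, Cmod_R in H3. exact H3.
Qed.

Lemma FBr_scal x a : FBr a -> FBr (fun k => x * a k).
Proof.
  intros Ha. apply FBr_FB in Ha.
  destruct (FB_scal (RtoC x) _ Ha) as [M [c [H1 [H2 H3]]]]. exists M, c. repeat split; auto.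
  intro k. specialize (H3 k). rewrite <- RtoC_mult, Cmod_R in H3. exact H3.
Qed.

Lemma FBr_mulb a (b : nat -> R) K B : FBr a -> 0 <= K -> 0 <= B -> (forall k, Rabs (b k) <= K * B ^ k) ->
  FBr (fun k => b k * a k).
Proof.
  intros [M [c [H1 [H2 H3]]]] HK HB Hb. exists (K * M), (B * c). split. nra. split. nra.
  intro k. rewrite Rabs_mult. rewrite Rpow_mult_distr.
  assert (Hf := fact_pos k).
  specialize (H3 k). specialize (Hb k).
  apply Rle_trans with (K * B ^ k * (M * c ^ k / INR (fact k))).
  apply Rmult_le_compat; auto; apply Rabs_pos.
  right. unfold Rdiv. ring.
Qed.

Lemma FBr_nk a : FBr a -> FBr (nk a).
Proof.
  intro H. unfold nk. apply FBr_ext with (fun k => (2 * INR k) * a k). intro; ring.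
  apply FBr_mulb with 2 2; auto; try lra. intro k. rewrite Rabs_pos_eq.
  apply Rmult_le_compat_l. lra. apply INR_le_pow2. assert (0 <= INR k) by apply pos_INR. lra.
Qed.

Lemma FBr_tl a : FBr a -> FBr (tl a).
Proof.
  intros Ha. apply FBr_FB, FB_dseq in Ha. destruct Ha as [M [c [H1 [H2 H3]]]].
  exists M, c. repeat split; auto. intro k. specialize (H3 k). unfold dseq in H3.
  rewrite <- RtoC_mult, Cmod_R, Rabs_mult, Rabs_pos_eq in H3 by apply pos_INR.
  unfold tl. assert (HS : 1 <= INR (S k)) by (apply (le_INR 1); lia).
  assert (0 <= Rabs (a (S k))) by apply Rabs_pos. nra.
Qed.

Lemma FBr_sh a : FBr a -> FBr (sh a).
Proof.
  intros [M [c [H1 [H2 H3]]]]. exists M, (2 * (c + 1)). split; auto. split. lra.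
  intros [|k]; simpl sh.
  - rewrite Rabs_R0. simpl. unfold Rdiv. rewrite Rinv_1. lra.
  - specialize (H3 k). rewrite fact_simpl, mult_INR.
    assert (Hf := fact_pos k). assert (HS : 1 <= INR (S k)) by (apply (le_INR 1); lia).
    eapply Rle_trans. exact H3.
    assert (Hk : INR (S k) <= 2 ^ S k) by apply INR_le_pow2.
    assert (Hc1 : c ^ k <= (c + 1) ^ S k).
    { apply Rle_trans with ((c+1) ^ k). apply pow_incr; lra. apply Rle_pow; [lra|lia]. }
    rewrite Rpow_mult_distr.
    assert (0 <= c ^ k) by (apply pow_le; lra).
    unfold Rdiv. rewrite Rinv_mult.
    assert (0 < / INR (fact k)) by (apply Rinv_0_lt_compat; lra).
    assert (0 < / INR (S k)) by (apply Rinv_0_lt_compat; lra).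
    assert (HH : M * c ^ k <= M * (c+1) ^ S k) by (apply Rmult_le_compat_l; lra).
    assert (HH2 : 1 <= 2 ^ S k * / INR (S k)).
    { apply Rmult_le_reg_r with (INR (S k)). lra. rewrite Rmult_assoc, Rinv_l by lra. lra. }
    assert (0 <= M * (c+1) ^ S k) by (apply Rmult_le_pos; auto; apply pow_le; lra).
    apply Rle_trans with (M * (c + 1) ^ S k * / INR (fact k)).
    apply Rmult_le_compat_r; lra.
    replace (M * (2 ^ S k * (c + 1) ^ S k) * (/ INR (S k) * / INR (fact k)))
      with ((M * (c + 1) ^ S k * / INR (fact k)) * (2 ^ S k * / INR (S k))) by ring.
    assert (0 <= M * (c + 1) ^ S k * / INR (fact k)) by (apply Rmult_le_pos; lra).
    nra.
Qed.

Open Scope C_scope.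

Lemma CEr_ext a b z : (forall k, a k = b k) -> CEr a z = CEr b z.
Proof. intro H. unfold CEr, CE. apply CSeries_ext. intro k. rewrite H. reflexivity. Qed.

Lemma CEr_plus a b z : FBr a -> FBr b -> CEr (fun k => (a k + b k)%R) z = CEr a z + CEr b z.
Proof.
  intros Ha Hb. unfold CEr, CE. rewrite <- CSeries_plus by (apply FB_ACV, FBr_FB; auto).
  apply CSeries_ext. intro k. rewrite RtoC_plus. ring.
Qed.

Lemma CEr_scal x a z : FBr a -> CEr (fun k => (x * a k)%R) z = RtoC x * CEr a z.
Proof.
  intros Ha. unfold CEr, CE. rewrite <- CSeries_scal by (apply FB_ACV, FBr_FB; auto).
  apply CSeries_ext. intro k. rewrite RtoC_mult. ring.
Qed.

Lemma CEr_shift a z : FBr a -> CEr a z = RtoC (a 0%nat) + z * CEr (tl a) z.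
Proof.
  intros Ha. unfold CEr, CE. rewrite CSeries_incr_1 by (apply FB_ACV, FBr_FB; auto).
  rewrite <- CSeries_scal by (apply FB_ACV, FBr_FB, FBr_tl; auto).
  f_equal. simpl. ring. apply CSeries_ext. intro k. unfold tl. simpl. ring.
Qed.

Lemma CEr_sh a z : FBr a -> CEr (sh a) z = z * CEr a z.
Proof.
  intros Ha. rewrite CEr_shift by (apply FBr_sh; auto). simpl.
  rewrite (CEr_ext (tl (sh a)) a) by (intro; reflexivity). ring.
Qed.

Lemma CEr_zero z : CEr (fun _ => 0%R) z = 0.
Proof.
  rewrite (CEr_ext _ (fun k => (0 * 0)%R)) by (intro; ring).
  unfold CEr, CE. unfold CSeries. simpl.
  apply injective_projections; simpl;
  (rewrite (Series_ext _ (fun k => 0 * Re (RtoC 0 * Cpown z k)))%R by (intro; simpl; ring));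
  rewrite Series_scal_l; ring.
Qed.

Definition e0 (k : nat) : R := match k with O => 1 | _ => 0 end.

Lemma FBr_zero : FBr (fun _ => 0%R).
Proof. exists 0%R, 0%R. repeat split; try lra. intro. rewrite Rabs_R0. unfold Rdiv. rewrite !Rmult_0_l. lra. Qed.

Lemma FBr_e0 : FBr e0.
Proof.
  exists 1%R, 1%R. repeat split; try lra. intros [|k]; simpl. rewrite Rabs_R1. lra.
  rewrite Rabs_R0. rewrite pow1. apply Rmult_le_pos. lra. left; apply Rinv_0_lt_compat.
  apply (fact_pos (S k)).
Qed.

Lemma CEr_e0 z : CEr e0 z = 1.
Proof.
  rewrite CEr_shift by apply FBr_e0. simpl.
  rewrite (CEr_ext (tl e0) (fun _ => 0%R)) by (intro; reflexivity). rewrite CEr_zero. ring.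
Qed.

Lemma CD_CEr a w : FBr a -> CD (fun t => CEr a (q t)) w (CEr (nk a) (q w)).
Proof.
  intros Ha. eapply CD_eq. apply (CD_comp (CEr a) q). apply CE_derive. apply FBr_FB; auto.
  apply CD_q.
  assert (Hfb : FBr (fun k => (INR k * a k)%R)).
  { apply FBr_ext with (fun k => (/2 * nk a k)%R). intro; unfold nk; field.
    apply FBr_scal, FBr_nk; auto. }
  unfold nk. rewrite (CEr_ext _ (fun k => (2 * (INR k * a k))%R)) by (intro; ring).
  rewrite CEr_scal by auto. rewrite (CEr_shift (fun k => (INR k * a k)%R)) by auto.
  assert (Hd : CE (dseq (fun k => RtoC (a k))) (q w) = CEr (tl (fun k => (INR k * a k)%R)) (q w)).
  { unfold CEr, CE. apply CSeries_ext. intro k. unfold dseq, tl. rewrite RtoC_mult. ring. }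
  rewrite Hd. simpl INR. rewrite Rmult_0_l. ring.
Qed.

Close Scope C_scope. Open Scope R_scope.
Open Scope R_scope.

Definition tele (j : nat) : R := / INR (j + 1) - / INR (j + 2).

Lemma tele_sum n : sum_f_R0 tele n = 1 - / INR (n + 2).
Proof.
  induction n. unfold tele; simpl. field.
  rewrite tech5, IHn. unfold tele.
  replace (S n + 1)%nat with (n + 2)%nat by lia. replace (S n + 2)%nat with (S (n + 2)) by lia.
  ring.
Qed.

Lemma is_series_tele : is_series tele 1.
Proof.
  apply is_series_Reals. intros eps Heps.
  destruct (archimed (/ eps)) as [H1 _].
  assert (Hup : (0 <= up (/ eps))%Z).
  { apply le_IZR. assert (0 < / eps) by (apply Rinv_0_lt_compat; lra). lra. }
  exists (Z.to_nat (up (/ eps))). intros n Hn.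
  rewrite tele_sum. unfold Rdist.
  replace (1 - / INR (n + 2) - 1) with (- / INR (n + 2)) by ring.
  assert (HnR : IZR (up (/ eps)) <= INR n).
  { rewrite <- (Z2Nat.id (up (/ eps))) by auto. rewrite <- INR_IZR_INZ. apply le_INR. lia. }
  assert (Hpos : 0 < INR (n + 2)) by (apply lt_0_INR; lia).
  rewrite Rabs_Ropp, Rabs_pos_eq by (left; apply Rinv_0_lt_compat; auto).
  assert (H2 : / eps < INR (n + 2)) by (rewrite plus_INR; simpl; lra).
  apply Rinv_lt_contravar in H2. rewrite Rinv_inv in H2. auto.
  apply Rmult_lt_0_compat; auto. apply Rinv_0_lt_compat; lra.
Qed.

Lemma inv_sq_le_tele k j : / INR (k + 1 + j) ^ 2 <= 2 * tele j.
Proof.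
  unfold tele.
  assert (H1 : 1 <= INR (j + 1)) by (apply (le_INR 1); lia).
  assert (H2 : INR (j + 2) = INR (j + 1) + 1) by (rewrite !plus_INR; simpl; ring).
  assert (H3 : INR (j + 1) <= INR (k + 1 + j)) by (apply le_INR; lia).
  rewrite H2.
  assert (/ INR (k + 1 + j) ^ 2 <= / INR (j + 1) ^ 2).
  { apply Rinv_le_contravar. apply pow_lt; lra. apply pow_incr; lra. }
  assert (/ INR (j + 1) ^ 2 <= 2 * (/ INR (j + 1) - / (INR (j + 1) + 1))).
  { set (x := INR (j + 1)) in *.
    replace (2 * (/ x - / (x + 1))) with (2 / (x * (x + 1))) by (field; lra).
    replace (/ x ^ 2) with (1 / (x * x)) by (field; lra).
    apply Rmult_le_reg_r with (x * x * (x + 1)). nra.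
    replace (1 / (x * x) * (x * x * (x + 1))) with (x + 1) by (field; lra).
    replace (2 / (x * (x + 1)) * (x * x * (x + 1))) with (2 * x) by (field; lra). lra. }
  lra.
Qed.

Lemma ex_series_invsq k : ex_series (fun j => / INR (k + 1 + j) ^ 2).
Proof.
  apply ex_series_R_le with (fun j => 2 * tele j).
  intro j. rewrite Rabs_pos_eq. apply inv_sq_le_tele.
  left. apply Rinv_0_lt_compat, pow_lt, lt_0_INR; lia.
  apply (ex_series_scal (V:=R_NormedModule)). exists 1. apply is_series_tele.
Qed.

Lemma dpsi1_bound k : Rabs (dpsi1 k) <= 2.
Proof.
  unfold dpsi1. rewrite Rabs_pos_eq.
  - replace 2 with (Series (fun j => 2 * tele j)).
    apply Series_le. intro j; split. left. apply Rinv_0_lt_compat, pow_lt, lt_0_INR; lia.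
    apply inv_sq_le_tele.
    apply (ex_series_scal (V:=R_NormedModule)). exists 1. apply is_series_tele.
    rewrite Series_scal_l. rewrite (is_series_unique _ _ is_series_tele). ring.
  - apply Series_nonneg. intro j. left. apply Rinv_0_lt_compat, pow_lt, lt_0_INR; lia.
    apply ex_series_invsq.
Qed.

Lemma dpsi1_rec k : dpsi1 k = / INR (S k) ^ 2 + dpsi1 (S k).
Proof.
  unfold dpsi1. rewrite Series_incr_1 by apply ex_series_invsq.
  replace (k + 1 + 0)%nat with (S k) by lia. f_equal.
  apply Series_ext. intro j. replace (k + 1 + S j)%nat with (S k + 1 + j)%nat by lia. reflexivity.
Qed.

Lemma harm_bound k : 0 <= harm k <= INR k.
Proof.
  induction k. simpl; lra. change (harm (S k)) with (harm k + / INR (S k)).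
  assert (HS := S_INR k).
  assert (H1 : 0 < / INR (S k)) by (apply Rinv_0_lt_compat, lt_0_INR; lia).
  assert (H2 : / INR (S k) <= 1).
  { rewrite <- Rinv_1. apply Rinv_le_contravar. lra. apply (le_INR 1); lia. }
  lra.
Qed.

Lemma psi1_rec k : psi1 (S k) = psi1 k + / INR (S k).
Proof. unfold psi1. change (harm (S k)) with (harm k + / INR (S k)). ring. Qed.

Definition Kg : R := Rabs euler_gamma + 1.

Lemma psi1_bound k : Rabs (psi1 k) <= Kg * 2 ^ k.
Proof.
  unfold psi1, Kg. assert (H := harm_bound k). assert (H2 := INR_le_pow2 k).
  assert (H3 : 1 <= 2 ^ k) by (apply pow_R1_Rle; lra).
  eapply Rle_trans. apply Rabs_triang. rewrite Rabs_Ropp, (Rabs_pos_eq (harm k)) by lra.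
  pose proof (Rabs_pos euler_gamma). nra.
Qed.

Definition fk (k : nat) : R := INR (fact k).
Definition j0r (k : nat) : R := (-1) ^ k / (fk k * fk k).
Definition j1r (k : nat) : R := (-1) ^ k / (fk k * fk (S k)).
Definition phr (k : nat) : R := j0r k * psi1 k.
Definition p1r : nat -> R := sh (fun j => 2 * j1r j).
Definition p2r : nat -> R := sh (fun j => 2 * (j1r j * (psi1 j + psi1 (S j)))).
Definition sgr (k : nat) : R := j0r k * (psi1 k ^ 2 - dpsi1 k / 2 + PI ^ 2 / 4).

Lemma fk_pos k : 0 < fk k.
Proof. apply fact_pos. Qed.
Lemma fk_ge1 k : 1 <= fk k.
Proof. unfold fk. apply (le_INR 1). apply lt_O_fact. Qed.
Lemma fk_S k : fk (S k) = INR (S k) * fk k.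
Proof. unfold fk. rewrite fact_simpl, mult_INR. reflexivity. Qed.

Lemma pow_m1_abs k : Rabs ((-1) ^ k) = 1.
Proof. rewrite <- RPow_abs. replace (Rabs (-1)) with 1. apply pow1. rewrite Rabs_left; lra. Qed.

Lemma FBr_j0r : FBr j0r.
Proof.
  exists 1, 1. repeat split; try lra. intro k. unfold j0r. rewrite pow1.
  unfold Rdiv. rewrite Rabs_mult, pow_m1_abs, Rabs_pos_eq.
  2:{ left. apply Rinv_0_lt_compat. pose proof (fk_pos k). nra. }
  assert (H := fk_ge1 k). unfold fk in *. rewrite Rinv_mult.
  assert (0 < / INR (fact k)) by (apply Rinv_0_lt_compat; lra).
  assert (/ INR (fact k) <= 1) by (rewrite <- Rinv_1; apply Rinv_le_contravar; lra).
  nra.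
Qed.

Lemma FBr_j1r : FBr j1r.
Proof.
  exists 1, 1. repeat split; try lra. intro k. unfold j1r. rewrite pow1.
  unfold Rdiv. rewrite Rabs_mult, pow_m1_abs, Rabs_pos_eq.
  2:{ left. apply Rinv_0_lt_compat. pose proof (fk_pos k). pose proof (fk_pos (S k)). nra. }
  assert (H := fk_ge1 (S k)). pose proof (fk_pos k). unfold fk in *. rewrite Rinv_mult.
  assert (0 < / INR (fact k)) by (apply Rinv_0_lt_compat; lra).
  assert (/ INR (fact (S k)) <= 1) by (rewrite <- Rinv_1; apply Rinv_le_contravar; lra).
  assert (0 < / INR (fact (S k))) by (apply Rinv_0_lt_compat; lra).
  nra.
Qed.

Lemma FBr_phr : FBr phr.
Proof.
  unfold phr. apply FBr_ext with (fun k => psi1 k * j0r k). intro; ring.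
  apply FBr_mulb with Kg 2. apply FBr_j0r. unfold Kg; pose proof (Rabs_pos euler_gamma); lra. lra.
  apply psi1_bound.
Qed.

Lemma FBr_p1r : FBr p1r.
Proof. apply FBr_sh, FBr_scal, FBr_j1r. Qed.

Lemma FBr_p2r : FBr p2r.
Proof.
  apply FBr_sh, FBr_scal. apply FBr_ext with (fun k => (psi1 k + psi1 (S k)) * j1r k). intro; ring.
  apply FBr_mulb with (3 * Kg) 2. apply FBr_j1r. unfold Kg; pose proof (Rabs_pos euler_gamma); lra. lra.
  intro k. eapply Rle_trans. apply Rabs_triang.
  assert (H1 := psi1_bound k). assert (H2 := psi1_bound (S k)). simpl pow in H2. lra.
Qed.

Lemma FBr_sgr : FBr sgr.
Proof.
  unfold sgr. apply FBr_ext with (fun k => (psi1 k ^ 2 - dpsi1 k / 2 + PI ^ 2 / 4) * j0r k). intro; ring.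
  apply FBr_mulb with (Kg ^ 2 + 1 + PI ^ 2) 4. apply FBr_j0r.
  pose proof (pow2_ge_0 PI). pose proof (pow2_ge_0 Kg). lra. lra.
  intro k. assert (H1 := psi1_bound k). assert (H2 := dpsi1_bound k).
  assert (H3 : 1 <= 4 ^ k) by (apply pow_R1_Rle; lra).
  assert (H4 : Rabs (psi1 k ^ 2) <= Kg ^ 2 * 4 ^ k).
  { rewrite <- RPow_abs. replace (4 ^ k) with ((2 ^ k) ^ 2).
    rewrite <- Rpow_mult_distr. apply pow_incr. split. apply Rabs_pos. auto.
    rewrite <- pow_mult, (Nat.mul_comm k 2), pow_mult. f_equal. ring. }
  pose proof (pow2_ge_0 PI).
  eapply Rle_trans. apply Rabs_triang. rewrite (Rabs_pos_eq (PI ^ 2 / 4)) by lra.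
  eapply Rle_trans. apply Rplus_le_compat_r. apply Rabs_triang.
  rewrite Rabs_Ropp. unfold Rdiv at 1. rewrite Rabs_mult, (Rabs_pos_eq (/2)) by lra.
  assert (PI ^ 2 / 4 <= PI ^ 2 * 4 ^ k) by nra.
  nra.
Qed.

Close Scope C_scope. Open Scope R_scope.
Open Scope C_scope.

Lemma Cpown_2k z k : Cpown z (2 * k) = Cpown (z * z) k.
Proof.
  induction k. reflexivity.
  replace (2 * S k)%nat with (S (S (2 * k))) by lia. simpl Cpown. rewrite <- IHk.
  simpl. ring.
Qed.

Lemma Cpown_2k1 z k : Cpown z (2 * k + 1) = z * Cpown (z * z) k.
Proof. replace (2 * k + 1)%nat with (S (2 * k)) by lia. change (Cpown z (S (2 * k))) with (z * Cpown z (2 * k)). rewrite Cpown_2k. reflexivity. Qed.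

Lemma RtoC_fk_neq0 k : RtoC (fk k) <> 0.
Proof. intro H. apply RtoC_inj in H. pose proof (fk_pos k). lra. Qed.

Lemma term0 w k : RtoC ((-1) ^ k) * Cpown (Cexp w / RtoC 2) (2 * k) / (kf k * kf k)
  = RtoC (j0r k) * Cpown (q w) k.
Proof.
  rewrite Cpown_2k. unfold q, j0r, kf. fold (fk k).
  rewrite RtoC_div, RtoC_mult. field. apply RtoC_fk_neq0.
  pose proof (fk_pos k). nra.
Qed.

Lemma term1 w k : RtoC ((-1) ^ k) * Cpown (Cexp w / RtoC 2) (2 * k + 1) / (kf k * kf (k + 1))
  = (Cexp w / RtoC 2) * (RtoC (j1r k) * Cpown (q w) k).
Proof.
  rewrite Cpown_2k1. unfold q, j1r, kf. rewrite Nat.add_1_r. fold (fk k). fold (fk (S k)).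
  rewrite RtoC_div, RtoC_mult. field. split; apply RtoC_fk_neq0.
  pose proof (fk_pos k). pose proof (fk_pos (S k)). nra.
Qed.

Lemma lin3 (c1 c2 : C) a b d z : FBr a -> FBr b -> FBr d ->
  CSeries (fun k => c1 * (RtoC (a k) * Cpown z k) + c2 * (RtoC (b k) * Cpown z k) + RtoC (d k) * Cpown z k)
  = c1 * CEr a z + c2 * CEr b z + CEr d z.
Proof.
  intros Ha Hb Hd.
  assert (Aa := FB_ACV _ z (FBr_FB _ Ha)). assert (Ab := FB_ACV _ z (FBr_FB _ Hb)).
  assert (Ad := FB_ACV _ z (FBr_FB _ Hd)).
  rewrite CSeries_plus. rewrite CSeries_plus. rewrite !CSeries_scal by auto. reflexivity.
  all: try apply ACV_plus; try apply ACV_scal; auto.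
Qed.

Lemma RtoC_m1 : RtoC (-1) = - (1).
Proof. unfold RtoC. apply injective_projections; simpl; lra. Qed.

Lemma J0_rep w : J0 w = CEr j0r (q w).
Proof. unfold J0, CEr, CE. apply CSeries_ext. intro k. apply term0. Qed.

Lemma J1_rep0 w : J1 w = (Cexp w / RtoC 2) * CEr j1r (q w).
Proof.
  unfold J1, CEr, CE. rewrite <- CSeries_scal by (apply FB_ACV, FBr_FB, FBr_j1r).
  apply CSeries_ext. intro k. apply term1.
Qed.

Lemma ZJ1_rep w : Cexp w * J1 w = CEr p1r (q w).
Proof.
  rewrite J1_rep0. unfold p1r. rewrite CEr_sh by (apply FBr_scal, FBr_j1r).
  rewrite CEr_scal by apply FBr_j1r. unfold q. field.
Qed.

Lemma Y0_rep w : Y0 w = RtoC (2 / PI) * ((w - RtoC (ln 2)) * CEr j0r (q w) - CEr phr (q w)).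
Proof.
  unfold Y0. f_equal.
  transitivity ((w - RtoC (ln 2)) * CEr j0r (q w) + RtoC (-1) * CEr phr (q w) + CEr (fun _ => 0%R) (q w)).
  2:{ rewrite CEr_zero. rewrite RtoC_m1. ring. }
  rewrite <- lin3 by (apply FBr_j0r || apply FBr_phr || apply FBr_zero).
  apply CSeries_ext. intro k. rewrite term0. unfold phr. rewrite RtoC_mult, RtoC_m1. ring.
Qed.

Definition p2' (k : nat) : R := j1r k * (psi1 k + psi1 (S k)).

Lemma FBr_p2' : FBr p2'.
Proof.
  unfold p2'. apply FBr_ext with (fun k => ((psi1 k + psi1 (S k)) * j1r k)%R). intro; ring.
  apply FBr_mulb with (3 * Kg)%R 2%R. apply FBr_j1r. unfold Kg; pose proof (Rabs_pos euler_gamma); lra. lra.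
  intro k. eapply Rle_trans. apply Rabs_triang.
  assert (H1 := psi1_bound k). assert (H2 := psi1_bound (S k)). simpl pow in H2. simpl pow. lra.
Qed.

Lemma ZY1_rep w : Cexp w * Y1 w =
  - RtoC (2 / PI) + RtoC (2 / PI) * (w - RtoC (ln 2)) * CEr p1r (q w) - RtoC (1 / PI) * CEr p2r (q w).
Proof.
  unfold Y1.
  assert (Hs : CSeries (fun k => RtoC ((-1) ^ k) * RtoC (psi1 k + psi1 (k + 1))
                       * Cpown (Cexp w / RtoC 2) (2 * k + 1) / (kf k * kf (k + 1)))
             = (Cexp w / RtoC 2) * CEr p2' (q w)).
  { unfold CEr, CE. rewrite <- CSeries_scal by (apply FB_ACV, FBr_FB, FBr_p2').
    apply CSeries_ext. intro k.
    transitivity (RtoC (psi1 k + psi1 (k + 1)) * (RtoC ((-1) ^ k) * Cpown (Cexp w / RtoC 2) (2 * k + 1) / (kf k * kf (k + 1)))).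
    unfold Cdiv. ring. rewrite term1. unfold p2'. rewrite Nat.add_1_r. rewrite RtoC_mult. ring. }
  rewrite Hs.
  assert (Hp : CEr p2r (q w) = q w * (RtoC 2 * CEr p2' (q w))).
  { unfold p2r. rewrite CEr_sh. rewrite <- CEr_scal by apply FBr_p2'. reflexivity.
    apply FBr_ext with (fun k => (2 * p2' k)%R). reflexivity. apply FBr_scal, FBr_p2'. }
  rewrite Hp. rewrite <- ZJ1_rep.
  assert (He := Cexp_neq0 w). unfold q. field. auto.
Qed.

Lemma S10_rep w : S10 w = RtoC (1 / 2) *
  ((w - RtoC (ln 2)) * (w - RtoC (ln 2)) * CEr j0r (q w)
   - RtoC 2 * (w - RtoC (ln 2)) * CEr phr (q w) + CEr sgr (q w)).
Proof.
  unfold S10. f_equal.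
  transitivity ((w - RtoC (ln 2)) * (w - RtoC (ln 2)) * CEr j0r (q w)
    + (- RtoC 2 * (w - RtoC (ln 2))) * CEr phr (q w) + CEr sgr (q w)).
  2:{ ring. }
  rewrite <- lin3 by (apply FBr_j0r || apply FBr_phr || apply FBr_sgr).
  apply CSeries_ext. intro k. rewrite term0. unfold phr, sgr.
  rewrite !RtoC_mult. rewrite RtoC_plus, RtoC_minus, RtoC_pow. ring.
Qed.

Close Scope C_scope. Open Scope R_scope.
Open Scope R_scope.

Lemma INRS_pos j : 0 < INR (S j).
Proof. apply lt_0_INR; lia. Qed.

Lemma pow_m1_S j : (-1) ^ S j = - (-1) ^ j.
Proof. simpl. ring. Qed.

Ltac coef_simpl :=
  unfold nk, sh, e0, p1r, p2r, phr, sgr, j0r, j1r; simpl sh;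
  rewrite ?fk_S, ?pow_m1_S.

Lemma cf1 k : nk j0r k = - p1r k.
Proof.
  destruct k as [|j]. unfold nk, p1r, sh. simpl. ring.
  unfold nk, p1r, sh, j0r, j1r. rewrite !fk_S, pow_m1_S.
  pose proof (fk_pos j). pose proof (INRS_pos j). field. lra.
Qed.

Lemma cf2 k : 2 * j0r k - 2 * nk phr k - p2r k = 2 * e0 k.
Proof.
  destruct k as [|j]. unfold nk, p2r, sh, e0, j0r. simpl. unfold fk; simpl. field.
  unfold nk, p2r, sh, e0, phr, j0r, j1r. rewrite !fk_S, pow_m1_S, psi1_rec.
  pose proof (fk_pos j). pose proof (INRS_pos j). field. lra.
Qed.

Lemma cf3 k : nk p1r k = sh (fun j => 4 * j0r j) k.
Proof.
  destruct k as [|j]. unfold nk, p1r, sh. simpl. ring.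
  unfold nk, p1r, sh, j0r, j1r. rewrite !fk_S.
  pose proof (fk_pos j). pose proof (INRS_pos j). field. lra.
Qed.

Lemma cf4 k : 2 * p1r k - nk p2r k + 2 * sh (fun j => 4 * phr j) k = 0.
Proof.
  destruct k as [|j]. unfold nk, p1r, p2r, sh. simpl. ring.
  unfold nk, p1r, p2r, sh, phr, j0r, j1r. rewrite !fk_S, psi1_rec.
  pose proof (fk_pos j). pose proof (INRS_pos j). field. lra.
Qed.

Lemma cf6a k : nk (nk j0r) k = -4 * sh j0r k.
Proof.
  destruct k as [|j]. unfold nk, sh. simpl. ring.
  unfold nk, sh, j0r. rewrite !fk_S, pow_m1_S.
  pose proof (fk_pos j). pose proof (INRS_pos j). field. lra.
Qed.

Lemma cf6b k : 2 * nk j0r k - nk (nk phr) k = 4 * sh phr k.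
Proof.
  destruct k as [|j]. unfold nk, sh. simpl. ring.
  unfold nk, sh, phr, j0r. rewrite !fk_S, pow_m1_S, psi1_rec.
  pose proof (fk_pos j). pose proof (INRS_pos j). field. lra.
Qed.

Lemma cf6c k : 2 * j0r k - 4 * nk phr k + nk (nk sgr) k + 4 * sh sgr k = 2 * e0 k.
Proof.
  destruct k as [|j]. unfold nk, sh, e0, j0r. simpl. unfold fk; simpl. field.
  unfold nk, sh, e0, phr, sgr, j0r. rewrite !fk_S, pow_m1_S, psi1_rec, (dpsi1_rec j).
  pose proof (fk_pos j). pose proof (INRS_pos j). field. lra.
Qed.

Close Scope C_scope. Open Scope R_scope.
Open Scope C_scope.

Lemma FBr_nk2 a : FBr a -> FBr (nk (nk a)).
Proof. intro; do 2 apply FBr_nk; auto. Qed.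

Hint Resolve FBr_j0r FBr_j1r FBr_phr FBr_p1r FBr_p2r FBr_sgr FBr_e0 FBr_zero FBr_nk FBr_sh FBr_scal FBr_plus FBr_nk2 : fbr.

Lemma CEr_lin4 (x1 x2 x3 x4 : R) a1 a2 a3 a4 z : FBr a1 -> FBr a2 -> FBr a3 -> FBr a4 ->
  CEr (fun k => (x1 * a1 k + x2 * a2 k + x3 * a3 k + x4 * a4 k)%R) z
  = RtoC x1 * CEr a1 z + RtoC x2 * CEr a2 z + RtoC x3 * CEr a3 z + RtoC x4 * CEr a4 z.
Proof.
  intros H1 H2 H3 H4.
  rewrite !CEr_plus by auto with fbr. rewrite !CEr_scal by auto. reflexivity.
Qed.

Lemma RtoC_lit (x : R) (y : R) : x = (- y)%R -> RtoC x = - RtoC y.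
Proof. intros ->. unfold RtoC. apply injective_projections; simpl; lra. Qed.

Lemma cerE1 z : CEr (nk j0r) z = - CEr p1r z.
Proof.
  assert (H := CEr_ext (nk j0r) (fun k => (-1 * p1r k)%R) z (fun k => ltac:(rewrite cf1; ring))).
  rewrite H. rewrite CEr_scal by auto with fbr. rewrite RtoC_m1. ring.
Qed.

Lemma cerE2 z : RtoC 2 * CEr j0r z - RtoC 2 * CEr (nk phr) z - CEr p2r z = RtoC 2.
Proof.
  assert (H := CEr_ext (fun k => (2 * j0r k + (-2) * nk phr k + (-1) * p2r k + 0 * e0 k)%R)
                (fun k => (2 * e0 k)%R) z (fun k => ltac:(cbv beta; rewrite <- cf2; ring))).
  rewrite CEr_lin4 in H by auto with fbr. rewrite CEr_scal, CEr_e0 in H by auto with fbr.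
  rewrite (RtoC_lit (-2) 2), RtoC_m1 in H by lra. transitivity (RtoC 2 * 1). rewrite <- H. ring. ring.
Qed.

Lemma cerE3 z : CEr (nk p1r) z = z * (RtoC 4 * CEr j0r z).
Proof.
  rewrite (CEr_ext (nk p1r) (sh (fun j => (4 * j0r j)%R)) z cf3).
  rewrite CEr_sh, CEr_scal by auto with fbr. reflexivity.
Qed.

Lemma cerE4 z : RtoC 2 * CEr p1r z - CEr (nk p2r) z + RtoC 2 * (z * (RtoC 4 * CEr phr z)) = 0.
Proof.
  assert (H := CEr_ext (fun k => (2 * p1r k + (-1) * nk p2r k + 2 * sh (fun j => 4 * phr j)%R k + 0 * e0 k)%R)
                (fun k => 0%R) z (fun k => ltac:(cbv beta; pose proof (cf4 k); lra))).
  rewrite CEr_lin4 in H by auto with fbr. rewrite CEr_zero in H.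
  rewrite CEr_sh, CEr_scal in H by auto with fbr. rewrite RtoC_m1 in H.
  transitivity (RtoC 0). rewrite <- H. ring. reflexivity.
Qed.

Lemma cerE6a z : CEr (nk (nk j0r)) z = - RtoC 4 * (z * CEr j0r z).
Proof.
  rewrite (CEr_ext (nk (nk j0r)) (fun k => (-4 * sh j0r k)%R) z cf6a).
  rewrite CEr_scal, CEr_sh by auto with fbr. rewrite (RtoC_lit (-4) 4) by lra. reflexivity.
Qed.

Lemma cerE6b z : RtoC 2 * CEr (nk j0r) z - CEr (nk (nk phr)) z = RtoC 4 * (z * CEr phr z).
Proof.
  assert (H := CEr_ext (fun k => (2 * nk j0r k + (-1) * nk (nk phr) k + 0 * e0 k + 0 * e0 k)%R)
                (fun k => (4 * sh phr k)%R) z (fun k => ltac:(cbv beta; pose proof (cf6b k); lra))).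
  rewrite CEr_lin4 in H by auto with fbr. rewrite CEr_scal, CEr_sh in H by auto with fbr.
  rewrite RtoC_m1 in H. rewrite <- H. ring.
Qed.

Lemma cerE6c z : RtoC 2 * CEr j0r z - RtoC 4 * CEr (nk phr) z + CEr (nk (nk sgr)) z
  + RtoC 4 * (z * CEr sgr z) = RtoC 2.
Proof.
  assert (H := CEr_ext (fun k => (2 * j0r k + (-4) * nk phr k + 1 * nk (nk sgr) k + 4 * sh sgr k)%R)
                (fun k => (2 * e0 k)%R) z (fun k => ltac:(cbv beta; pose proof (cf6c k); lra))).
  rewrite CEr_lin4 in H by auto with fbr. rewrite CEr_scal, CEr_sh, CEr_e0 in H by auto with fbr.
  rewrite (RtoC_lit (-4) 4) in H by lra.
  transitivity (RtoC 2 * 1). rewrite <- H. ring. ring.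
Qed.

Close Scope C_scope. Open Scope R_scope.
Open Scope C_scope.

Ltac CDstep :=
  match goal with
  | |- is_derive (fun t => CEr ?a (q t)) _ _ => apply CD_CEr; auto with fbr
  | |- is_derive Cexp _ _ => apply CD_Cexp
  | |- is_derive (fun t => Cexp t) _ _ => apply CD_Cexp
  | |- is_derive (fun t => t) _ _ => apply CD_id
  | |- is_derive (fun t => Cplus (@?f t) (@?g t)) _ _ => apply (CD_plus f g)
  | |- is_derive (fun t => Cminus (@?f t) (@?g t)) _ _ => apply (CD_minus f g)
  | |- is_derive (fun t => Copp (@?f t)) _ _ => apply (CD_opp f)
  | |- is_derive (fun t => Cmult (@?f t) (@?g t)) _ _ => apply (CD_mult f g)
  | |- is_derive (fun _ => ?c) _ _ => apply (CD_const c)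
  end.
Ltac CDtac := repeat CDstep.

Lemma PI_neq0 : PI <> 0%R.
Proof. pose proof PI_RGT_0. lra. Qed.

Lemma two_over_PI : RtoC (2 / PI) = RtoC 2 * RtoC (1 / PI).
Proof. rewrite <- RtoC_mult. f_equal. field. apply PI_neq0. Qed.

Lemma D_J0 w : CD J0 w (- (Cexp w * J1 w)).
Proof.
  apply CD_ext with (fun t => CEr j0r (q t)). intro t; symmetry; apply J0_rep.
  eapply CD_eq. CDtac. rewrite ZJ1_rep, cerE1. ring.
Qed.

Lemma D_Y0 w : CD Y0 w (- (Cexp w * Y1 w)).
Proof.
  apply CD_ext with (fun t => RtoC (2 / PI) * ((t - RtoC (ln 2)) * CEr j0r (q t) - CEr phr (q t))).
  intro t; symmetry; apply Y0_rep.
  eapply CD_eq. CDtac. rewrite ZY1_rep, cerE1.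
  assert (H := cerE2 (q w)).
  assert (Hp : CEr p2r (q w) = RtoC 2 * CEr j0r (q w) - RtoC 2 * CEr (nk phr) (q w) - RtoC 2).
  { transitivity (CEr p2r (q w) + ((RtoC 2 * CEr j0r (q w) - RtoC 2 * CEr (nk phr) (q w) - CEr p2r (q w)) - RtoC 2)).
    rewrite H. ring. ring. }
  rewrite Hp, two_over_PI. ring.
Qed.

Lemma D_ZJ1 w : CD (fun t => Cexp t * J1 t) w (Cexp w * Cexp w * J0 w).
Proof.
  apply CD_ext with (fun t => CEr p1r (q t)). intro t; symmetry; apply ZJ1_rep.
  eapply CD_eq. CDtac. rewrite cerE3, q_eq, J0_rep. ring.
Qed.

Lemma D_ZY1 w : CD (fun t => Cexp t * Y1 t) w (Cexp w * Cexp w * Y0 w).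
Proof.
  apply CD_ext with (fun t => - RtoC (2 / PI) + RtoC (2 / PI) * (t - RtoC (ln 2)) * CEr p1r (q t)
     - RtoC (1 / PI) * CEr p2r (q t)).
  intro t; symmetry; apply ZY1_rep.
  eapply CD_eq. CDtac. rewrite cerE3, q_eq, Y0_rep.
  assert (H := cerE4 (q w)).
  assert (Hp : CEr (nk p2r) (q w) = RtoC 2 * CEr p1r (q w) + RtoC 2 * (q w * (RtoC 4 * CEr phr (q w)))).
  { transitivity (CEr (nk p2r) (q w) + (RtoC 2 * CEr p1r (q w) - CEr (nk p2r) (q w) + RtoC 2 * (q w * (RtoC 4 * CEr phr (q w))))).
    rewrite H. ring. ring. }
  rewrite Hp, two_over_PI. ring.
Qed.

Definition TT (w : C) : C := RtoC (1 / 2) *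
  (RtoC 2 * (w - RtoC (ln 2)) * CEr j0r (q w)
   + (w - RtoC (ln 2)) * (w - RtoC (ln 2)) * CEr (nk j0r) (q w)
   - RtoC 2 * CEr phr (q w)
   - RtoC 2 * (w - RtoC (ln 2)) * CEr (nk phr) (q w)
   + CEr (nk sgr) (q w)).

Lemma D_S10 w : CD S10 w (TT w).
Proof.
  apply CD_ext with (fun t => RtoC (1 / 2) *
   ((t - RtoC (ln 2)) * (t - RtoC (ln 2)) * CEr j0r (q t)
   - RtoC 2 * (t - RtoC (ln 2)) * CEr phr (q t) + CEr sgr (q t))).
  intro t; symmetry; apply S10_rep.
  eapply CD_eq. CDtac. unfold TT. ring.
Qed.

Lemma D_TT w : CD TT w (1 - Cexp w * Cexp w * S10 w).
Proof.
  unfold TT at 1.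
  eapply CD_eq. CDtac. rewrite q_eq, S10_rep, cerE6a.
  assert (H6b := cerE6b (q w)). assert (H6c := cerE6c (q w)).
  assert (Hb : CEr (nk (nk phr)) (q w) = RtoC 2 * CEr (nk j0r) (q w) - RtoC 4 * (q w * CEr phr (q w))).
  { transitivity (CEr (nk (nk phr)) (q w) + (RtoC 2 * CEr (nk j0r) (q w) - CEr (nk (nk phr)) (q w) - RtoC 4 * (q w * CEr phr (q w)))).
    rewrite H6b. ring. ring. }
  assert (Hc : CEr (nk (nk sgr)) (q w) = RtoC 2 - RtoC 2 * CEr j0r (q w) + RtoC 4 * CEr (nk phr) (q w)
      - RtoC 4 * (q w * CEr sgr (q w))).
  { transitivity (CEr (nk (nk sgr)) (q w) - (RtoC 2 * CEr j0r (q w) - RtoC 4 * CEr (nk phr) (q w) + CEr (nk (nk sgr)) (q w)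
      + RtoC 4 * (q w * CEr sgr (q w)) - RtoC 2)).
    rewrite H6c. ring. ring. }
  rewrite Hb, Hc.
  replace (RtoC (1 / 2)) with (/ RtoC 2) by (rewrite RtoC_div by lra; field).
  field.

Qed.

Close Scope C_scope. Open Scope R_scope.
Open Scope C_scope.

Definition c2 : C -> C := fun v => Cexp v * Cexp v.

Lemma c2_CD (w : C) : CD c2 w (RtoC 2 * (Cexp w * Cexp w)).
Proof.
  unfold c2. eapply CD_eq. apply (CD_mult Cexp Cexp); apply CD_Cexp. ring.
Qed.

Lemma Cmod_pos_of_neq (z : C) : z <> 0 -> (0 < Cmod z)%R.
Proof. intro H. apply Cmod_gt_0. exact H. Qed.

Lemma hcd_of_CD (c f : C -> C) (w l dc : C) : CD f w l -> CD c w dc -> dc <> 0 ->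
  has_coord_deriv c f w (l / dc).
Proof.
  intros Hf Hc Hdc eps Heps.
  set (A := Cmod dc). set (B := Cmod l).
  assert (HA : ((0 < A)%R)) by (apply Cmod_pos_of_neq; auto).
  assert (HB : ((0 <= B)%R)) by apply Cmod_ge_0.
  set (e1 := (eps * A / 8)%R). set (e2 := Rmin (A / 2) (eps * A * A / (8 * (B + 1)))).
  assert (He1 : ((0 < e1)%R)) by (unfold e1; apply Rdiv_lt_0_compat; [apply Rmult_lt_0_compat|]; lra).
  assert (He2 : ((0 < e2)%R)).
  { unfold e2. apply Rmin_pos. lra. apply Rdiv_lt_0_compat. apply Rmult_lt_0_compat; [apply Rmult_lt_0_compat|]; lra. lra. }
  destruct (eps_of_is_derive_C f w l Hf e1 He1) as [d1 [Hd1 H1]].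
  destruct (eps_of_is_derive_C c w dc Hc e2 He2) as [d2 [Hd2 H2]].
  exists (Rmin d1 d2). split. apply Rmin_pos; auto.
  intros w' [Hw0 Hw1].
  set (h := w' - w) in *.
  assert (Hh1 : ((Cmod h < d1)%R)) by (apply Rlt_le_trans with (1 := Hw1), Rmin_l).
  assert (Hh2 : ((Cmod h < d2)%R)) by (apply Rlt_le_trans with (1 := Hw1), Rmin_r).
  specialize (H1 w' Hh1). specialize (H2 w' Hh2). fold h in H1, H2.
  set (Df := f w' - f w) in *. set (Dc := c w' - c w) in *.
  assert (He2A : ((e2 <= A / 2)%R)) by apply Rmin_l.
  assert (He2B : ((e2 * (B + 1) <= eps * A * A / 8)%R)).
  { apply Rle_trans with ((eps * A * A / (8 * (B + 1))) * (B + 1))%R.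
    apply Rmult_le_compat_r. lra. apply Rmin_r. right. field. lra. }
  assert (HDc : ((A * Cmod h / 2 <= Cmod Dc)%R)).
  { assert (Hx : (Cmod (dc * h) <= Cmod Dc + Cmod (Dc - dc * h))%R).
    { replace (dc * h) with (Dc - (Dc - dc * h)) at 1 by ring.
      eapply Rle_trans. apply Cmod_triangle. rewrite Cmod_opp. lra. }
    rewrite Cmod_mult in Hx. fold A in Hx.
    assert ((e2 * Cmod h <= A / 2 * Cmod h)%R) by (apply Rmult_le_compat_r; auto; apply Cmod_ge_0).
    lra. }
  assert (HDc0 : Dc <> 0).
  { intro H0. rewrite H0, Cmod_0 in HDc. assert ((0 < A * Cmod h / 2)%R).
    { apply Rdiv_lt_0_compat. apply Rmult_lt_0_compat; lra. lra. } lra. }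
  replace (Df / Dc - l / dc) with ((dc * (Df - l * h) - l * (Dc - dc * h)) / (dc * Dc)).
  2:{ field. split; auto. }
  rewrite Cmod_div by (apply Cmult_neq_0; auto).
  rewrite Cmod_mult. fold A.
  assert (Hnum : ((Cmod (dc * (Df - l * h) - l * (Dc - dc * h)) <= A * (e1 * Cmod h) + B * (e2 * Cmod h))%R)).
  { unfold Cminus at 1. eapply Rle_trans. apply Cmod_triangle. rewrite Cmod_opp, !Cmod_mult. fold A B.
    apply Rplus_le_compat; apply Rmult_le_compat_l; auto; lra. }
  apply Rle_lt_trans with ((A * (e1 * Cmod h) + B * (e2 * Cmod h)) / (A * (A * Cmod h / 2)))%R.
  { unfold Rdiv. apply Rmult_le_compat. apply Cmod_ge_0. left; apply Rinv_0_lt_compat.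
    apply Rmult_lt_0_compat. lra. apply Cmod_pos_of_neq; auto. auto.
    apply Rinv_le_contravar. apply Rmult_lt_0_compat. lra. apply Rdiv_lt_0_compat; [apply Rmult_lt_0_compat|]; lra.
    apply Rmult_le_compat_l; lra. }
  replace ((A * (e1 * Cmod h) + B * (e2 * Cmod h)) / (A * (A * Cmod h / 2)))%R
    with ((2 * (A * e1 + B * e2)) / (A * A))%R by (field; lra).
  apply Rmult_lt_reg_r with (A * A)%R. nra.
  unfold Rdiv. rewrite Rmult_assoc, Rinv_l by nra. rewrite Rmult_1_r.
  unfold e1. assert ((B * e2 <= e2 * (B + 1))%R) by nra. nra.
Qed.

Lemma hcd_unique (c f : C -> C) w l1 l2 : has_coord_deriv c f w l1 -> has_coord_deriv c f w l2 -> l1 = l2.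
Proof.
  intros H1 H2. destruct (Ceq_dec l1 l2) as [E|E]; auto. exfalso.
  set (d := Cmod (l1 - l2)).
  assert (Hd : ((0 < d)%R)) by (apply Cmod_pos_of_neq; intro H; apply E; apply Cminus_eq_0 in H || idtac;
     replace l1 with ((l1 - l2) + l2) by ring; rewrite H; ring).
  destruct (H1 (d / 2)%R ltac:(lra)) as [d1 [Hd1 K1]].
  destruct (H2 (d / 2)%R ltac:(lra)) as [d2 [Hd2 K2]].
  set (r := (Rmin d1 d2 / 2)%R). assert (Hr : ((0 < r)%R)) by (unfold r; apply Rdiv_lt_0_compat; [apply Rmin_pos|]; lra).
  assert (Hr1 : ((r < d1)%R)) by (unfold r; pose proof (Rmin_l d1 d2); lra).
  assert (Hr2 : ((r < d2)%R)) by (unfold r; pose proof (Rmin_r d1 d2); lra).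
  set (w' := w + RtoC r).
  assert (Hm : Cmod (w' - w) = r).
  { unfold w'. replace (w + RtoC r - w) with (RtoC r) by ring. rewrite Cmod_R, Rabs_pos_eq; lra. }
  specialize (K1 w' ltac:(rewrite Hm; lra)). specialize (K2 w' ltac:(rewrite Hm; lra)).
  set (Q := (f w' - f w) / (c w' - c w)) in *.
  assert ((Cmod (l1 - l2) <= Cmod (Q - l2) + Cmod (Q - l1))%R).
  { replace (l1 - l2) with ((Q - l2) - (Q - l1)) by ring. unfold Cminus at 1.
    eapply Rle_trans. apply Cmod_triangle. rewrite Cmod_opp. lra. }
  fold d in H. lra.
Qed.

Lemma coord_deriv_eq (c f : C -> C) w l : has_coord_deriv c f w l -> coord_deriv c f w = l.
Proof.
  intros H. unfold coord_deriv.
  apply (hcd_unique c f w). apply (epsilon_spec (inhabits (RtoC 0)) (fun l => has_coord_deriv c f w l)).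
  exists l; auto. auto.
Qed.

Lemma coord_deriv_CD (f : C -> C) (w l : C) : CD f w l ->
  coord_deriv (fun v => Cexp v * Cexp v) f w = l / (RtoC 2 * (Cexp w * Cexp w)).
Proof.
  intros H. apply coord_deriv_eq. apply hcd_of_CD; auto. apply (c2_CD w).
  apply Cmult_neq_0. intro H2; apply RtoC_inj in H2; lra.
  apply Cmult_neq_0; apply Cexp_neq0.
Qed.

Lemma coord_deriv_shift (s : C) (Hs : forall v, Cexp (v + s) * Cexp (v + s) = Cexp v * Cexp v) f w :
  coord_deriv (fun v => Cexp v * Cexp v) f (w + s)
  = coord_deriv (fun v => Cexp v * Cexp v) (fun u => f (u + s)) w.
Proof.
  unfold coord_deriv. f_equal. apply functional_extensionality. intro l.
  apply propositional_extensionality. split; intros H eps Heps;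
  destruct (H eps Heps) as [d [Hd H']]; exists d; split; auto; intros w' Hw'.
  - specialize (H' (w' + s)). cbv beta in H' |- *. rewrite !Hs in H'. apply H'.
    replace (w' + s - (w + s)) with (w' - w) by ring. auto.
  - specialize (H' (w' - s)). cbv beta in H' |- *. replace (w' - s + s) with w' in H' by ring.
    rewrite (Hs w). rewrite <- (Hs (w' - s)) in H'. replace (w' - s + s) with w' in H' by ring.
    apply H'. replace (w' - s - w) with (w' - (w + s)) by ring. auto.
Qed.

Lemma iterD2_shift (s : C) (Hs : forall v, Cexp (v + s) * Cexp (v + s) = Cexp v * Cexp v) :
  forall k f w, iterD2 k f (w + s) = iterD2 k (fun u => f (u + s)) w.
Proof.
  induction k; intros f w. reflexivity.
  simpl. rewrite coord_deriv_shift by auto. f_equal.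
  apply functional_extensionality. intro u. apply IHk.
Qed.

Definition Smooth (f : C -> C) := forall k w, exists l,
  has_coord_deriv (fun v => Cexp v * Cexp v) (iterD2 k f) w l.

Lemma hcd_plus (c f g : C -> C) w l1 l2 : has_coord_deriv c f w l1 -> has_coord_deriv c g w l2 ->
  has_coord_deriv c (fun u => f u + g u) w (l1 + l2).
Proof.
  intros H1 H2 eps Heps.
  destruct (H1 (eps / 2)%R ltac:(lra)) as [d1 [Hd1 K1]].
  destruct (H2 (eps / 2)%R ltac:(lra)) as [d2 [Hd2 K2]].
  exists (Rmin d1 d2). split. apply Rmin_pos; auto. intros w' [Hw0 Hw1].
  specialize (K1 w' (conj Hw0 (Rlt_le_trans _ _ _ Hw1 (Rmin_l _ _)))).
  specialize (K2 w' (conj Hw0 (Rlt_le_trans _ _ _ Hw1 (Rmin_r _ _)))).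
  replace ((f w' + g w' - (f w + g w)) / (c w' - c w) - (l1 + l2))
    with (((f w' - f w) / (c w' - c w) - l1) + ((g w' - g w) / (c w' - c w) - l2))
    by (unfold Cdiv; ring).
  eapply Rle_lt_trans. apply Cmod_triangle. lra.
Qed.

Lemma iterD2_plus f g : Smooth f -> Smooth g ->
  forall k, iterD2 k (fun u => f u + g u) = (fun u => iterD2 k f u + iterD2 k g u).
Proof.
  intros Hf Hg k. induction k. reflexivity.
  simpl. rewrite IHk. apply functional_extensionality. intro w.
  destruct (Hf k w) as [l1 H1]. destruct (Hg k w) as [l2 H2].
  rewrite (coord_deriv_eq _ _ _ _ H1), (coord_deriv_eq _ _ _ _ H2).
  apply coord_deriv_eq. apply hcd_plus; auto.
Qed.

Close Scope C_scope. Open Scope R_scope.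
Open Scope C_scope.

Lemma peval_nil z : peval [] z = RtoC 0.
Proof. reflexivity. Qed.
Lemma peval_cons a p z : peval (a :: p) z = RtoC a + z * peval p z.
Proof. reflexivity. Qed.

Lemma peval_padd p q z : peval (padd p q) z = peval p z + peval q z.
Proof.
  revert q. induction p as [|a p IH]; intros q.
  - simpl. ring.
  - destruct q as [|b q]. simpl. ring. simpl padd. rewrite !peval_cons, IH, RtoC_plus. ring.
Qed.

Lemma peval_pscale c p z : peval (pscale c p) z = RtoC c * peval p z.
Proof.
  induction p as [|a p IH]. simpl. ring.
  unfold pscale in *. simpl map. rewrite !peval_cons, IH, RtoC_mult. ring.
Qed.

Lemma peval_pX p z : peval (pX p) z = z * peval p z.
Proof. unfold pX. rewrite peval_cons. ring. Qed.

Lemma CD_Cpown_Cexp k (w : C) : CD (fun t => Cpown (Cexp t) k) w (RtoC (INR k) * Cpown (Cexp w) k).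
Proof.
  induction k.
  - simpl. eapply CD_eq. apply CD_const. ring.
  - simpl Cpown. eapply CD_eq. apply (CD_mult Cexp (fun t => Cpown (Cexp t) k)). apply CD_Cexp. apply IHk.
    rewrite S_INR, RtoC_plus. ring.
Qed.

Lemma CD_peval_aux p : forall k (w : C), CD (fun t => Cpown (Cexp t) k * peval p (Cexp t)) w
   (Cpown (Cexp w) k * peval (pxd_aux k p) (Cexp w)).
Proof.
  induction p as [|a p IH]; intros k w.
  - eapply CD_eq. apply CD_ext with (fun _ => RtoC 0). intro t. simpl. ring. apply CD_const. simpl. ring.
  - simpl pxd_aux.
    apply CD_ext with (fun t => RtoC a * Cpown (Cexp t) k + Cpown (Cexp t) (S k) * peval p (Cexp t)).
    intro t. rewrite peval_cons. simpl Cpown. ring.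
    eapply CD_eq. apply (CD_plus (fun t => RtoC a * Cpown (Cexp t) k)).
    apply CD_scal. apply CD_Cpown_Cexp. apply IH.
    rewrite peval_cons, RtoC_mult. simpl Cpown. ring.
Qed.

Lemma CD_peval p (w : C) : CD (fun t => peval p (Cexp t)) w (peval (pxd p) (Cexp w)).
Proof.
  eapply CD_eq. apply CD_ext with (fun t => Cpown (Cexp t) 0 * peval p (Cexp t)).
  intro; simpl; ring. apply CD_peval_aux. unfold pxd. simpl. ring.
Qed.

Lemma CD_Cexp_lin (c w : C) : CD (fun t => Cexp (c * t)) w (c * Cexp (c * w)).
Proof.
  apply (CD_comp Cexp (fun t => c * t)). apply CD_Cexp.
  eapply CD_eq. apply CD_scal. apply CD_id. ring.
Qed.

Definition evenl (p : list R) := forall i, Nat.odd i = true -> nth i p 0%R = 0%R.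

Lemma nth_padd p q i : nth i (padd p q) 0%R = (nth i p 0 + nth i q 0)%R.
Proof.
  revert q i. induction p as [|a p IH]; intros q i.
  - simpl. destruct i; ring.
  - destruct q as [|b q]. simpl padd. destruct i; simpl; ring.
    simpl padd. destruct i. simpl. ring. simpl. apply IH.
Qed.

Lemma nth_pscale c p i : nth i (pscale c p) 0%R = (c * nth i p 0)%R.
Proof.
  revert i. induction p as [|a p IH]; intros i.
  - simpl. destruct i; ring.
  - unfold pscale in *. simpl map. destruct i. simpl. ring. simpl. apply IH.
Qed.

Lemma nth_pxd_aux k p i : nth i (pxd_aux k p) 0%R = (INR (k + i) * nth i p 0)%R.
Proof.
  revert k i. induction p as [|a p IH]; intros k i.
  - simpl. destruct i; ring.
  - simpl pxd_aux. destruct i. simpl. rewrite Nat.add_0_r. ring.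
    simpl nth. rewrite IH. f_equal. f_equal. lia.
Qed.

Lemma evenl_padd p q : evenl p -> evenl q -> evenl (padd p q).
Proof. intros Hp Hq i Hi. rewrite nth_padd, Hp, Hq by auto. ring. Qed.

Lemma evenl_pscale c p : evenl p -> evenl (pscale c p).
Proof. intros Hp i Hi. rewrite nth_pscale, Hp by auto. ring. Qed.

Lemma evenl_pxd p : evenl p -> evenl (pxd p).
Proof. intros Hp i Hi. unfold pxd. rewrite nth_pxd_aux, Hp by auto. ring. Qed.

Lemma evenl_pXX p : evenl p -> evenl (pX (pX p)).
Proof.
  intros Hp i Hi. unfold pX. destruct i as [|[|i]]. discriminate. reflexivity.
  simpl. apply Hp. rewrite <- Hi. rewrite (Nat.odd_succ (S i)), Nat.even_succ. reflexivity.
Qed.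

Lemma evenl_ABC n : evenl (polyA n) /\ evenl (polyB n) /\ evenl (polyC n).
Proof.
  unfold polyA, polyB, polyC.
  induction n as [|n IH].
  - simpl. repeat split; intros [|[|i]] H; try reflexivity; discriminate || (simpl; destruct i; reflexivity).
  - destruct n. simpl. repeat split; intros [|[|i]] H; try reflexivity; discriminate || (simpl; destruct i; reflexivity).
    change (ABC (S (S n))) with
      (let '(a, b, c) := ABC (S n) in
      (padd (pscale (-2 * INR (S n)) a) (padd (pxd a) c),
       padd (pscale (-2 * INR (S n)) b) (padd (pxd b) (pscale (-1) (pX (pX c)))),
       padd (pscale (-2 * INR (S n)) c) (padd b (pxd c)))).
    destruct (ABC (S n)) as [[a b] c]. cbn [fst snd] in IH |- *. destruct IH as [Ha [Hb Hc]].
    repeat split; repeat (apply evenl_padd || apply evenl_pscale || apply evenl_pxd || apply evenl_pXX); auto.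
Qed.

Lemma phat_aux_zero p : forall k, (forall i, Nat.odd (k + i) = true -> nth i p 0%R = 0%R) ->
  forall z, peval (phat_aux k p) z = RtoC 0.
Proof.
  induction p as [|a p IH]; intros k Hk z.
  - reflexivity.
  - simpl phat_aux. rewrite peval_cons. rewrite (IH (S k)).
    + destruct (Nat.odd k) eqn:E.
      * assert (a = 0%R) by (apply (Hk 0%nat); rewrite Nat.add_0_r; auto). subst. ring.
      * ring.
    + intros i Hi. apply (Hk (S i)). rewrite <- Hi. f_equal. lia.
Qed.

Lemma phat_zero p z : evenl p -> peval (phat p) z = RtoC 0.
Proof. intro H. apply phat_aux_zero. intros i Hi. apply H. auto. Qed.

Lemma pbar_eq d p z : evenl p -> peval (pbar d p) z = peval p z.
Proof.
  intro H. unfold pbar. rewrite peval_padd, peval_pscale, phat_zero by auto. ring.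
Qed.

Lemma ABC_rec n : (1 <= n)%nat ->
  polyA (S n) = padd (pscale (-2 * INR n) (polyA n)) (padd (pxd (polyA n)) (polyC n)) /\
  polyB (S n) = padd (pscale (-2 * INR n) (polyB n)) (padd (pxd (polyB n)) (pscale (-1) (pX (pX (polyC n))))) /\
  polyC (S n) = padd (pscale (-2 * INR n) (polyC n)) (padd (polyB n) (pxd (polyC n))).
Proof.
  intros Hn. destruct n. lia. unfold polyA, polyB, polyC.
  change (ABC (S (S n))) with
      (let '(a, b, c) := ABC (S n) in
      (padd (pscale (-2 * INR (S n)) a) (padd (pxd a) c),
       padd (pscale (-2 * INR (S n)) b) (padd (pxd b) (pscale (-1) (pX (pX c)))),
       padd (pscale (-2 * INR (S n)) c) (padd b (pxd c)))).
  destruct (ABC (S n)) as [[a b] c]. simpl. auto.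
Qed.

Close Scope C_scope. Open Scope R_scope.
Open Scope C_scope.

Definition FnI (a0 : R) (U V : C -> C) (n : nat) (w : C) : C :=
  RtoC (/ 2 ^ n) * Cexp (RtoC (-2 * INR n) * w) *
  (RtoC a0 * peval (polyA n) (Cexp w) + peval (polyB n) (Cexp w) * U w + peval (polyC n) (Cexp w) * V w).

Definition Fnd (a0 : R) (U V : C -> C) (n : nat) (w : C) : C :=
  RtoC (/ 2 ^ n) * (RtoC (-2 * INR n) * Cexp (RtoC (-2 * INR n) * w) *
  (RtoC a0 * peval (polyA n) (Cexp w) + peval (polyB n) (Cexp w) * U w + peval (polyC n) (Cexp w) * V w)
  + Cexp (RtoC (-2 * INR n) * w) *
  (RtoC a0 * peval (pxd (polyA n)) (Cexp w)
   + (peval (pxd (polyB n)) (Cexp w) * U w + peval (polyB n) (Cexp w) * V w)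
   + (peval (pxd (polyC n)) (Cexp w) * V w + peval (polyC n) (Cexp w) * (RtoC a0 - Cexp w * Cexp w * U w)))).

Lemma Fn_CD a0 U V (HU : forall w, CD U w (V w)) (HV : forall w, CD V w (RtoC a0 - Cexp w * Cexp w * U w)) n w :
  CD (FnI a0 U V n) w (Fnd a0 U V n w).
Proof.
  unfold FnI. eapply CD_eq.
  apply (CD_mult (fun t => RtoC (/ 2 ^ n) * Cexp (RtoC (-2 * INR n) * t))).
  apply (CD_mult (fun _ => RtoC (/ 2 ^ n))). apply CD_const. apply CD_Cexp_lin.
  apply (CD_plus (fun t => RtoC a0 * peval (polyA n) (Cexp t) + peval (polyB n) (Cexp t) * U t)).
  apply (CD_plus (fun t => RtoC a0 * peval (polyA n) (Cexp t))).
  apply CD_scal. apply CD_peval.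
  apply (CD_mult (fun t => peval (polyB n) (Cexp t))). apply CD_peval. apply HU.
  apply (CD_mult (fun t => peval (polyC n) (Cexp t))). apply CD_peval. apply HV.
  unfold Fnd. ring.
Qed.

Lemma Cexp_shift2 n (w : C) : Cexp (RtoC (-2 * INR (S n)) * w) * (Cexp w * Cexp w) = Cexp (RtoC (-2 * INR n) * w).
Proof.
  rewrite <- !Cexp_add. f_equal. rewrite S_INR. rewrite !RtoC_mult, RtoC_plus. ring.
Qed.

Lemma two_neq0 : RtoC 2 <> 0.
Proof. intro H. apply RtoC_inj in H. lra. Qed.

Lemma iter_formula a0 U V (HU : forall w, CD U w (V w)) (HV : forall w, CD V w (RtoC a0 - Cexp w * Cexp w * U w)) :
  forall n, (1 <= n)%nat -> iterD2 n U = FnI a0 U V n.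
Proof.
  intros n Hn. induction n as [|n IH]. lia.
  destruct n as [|n].
  -
    apply functional_extensionality. intro w. simpl iterD2.
    rewrite (coord_deriv_CD U w (V w) (HU w)).
    unfold FnI, polyA, polyB, polyC. simpl ABC. cbn [fst snd].
    rewrite !peval_nil, peval_cons, peval_nil.
    assert (H1 := Cexp_shift2 0 w).
    replace (RtoC (-2 * INR 0) * w) with (RtoC 0) in H1 by (simpl; rewrite Rmult_0_r; ring).
    rewrite Cexp_0 in H1.
    assert (Hz := Cexp_neq0 w).
    assert (Hk : RtoC (/ 2 ^ 1) = / RtoC 2) by (rewrite <- RtoC_inv by lra; f_equal; simpl; field).
    rewrite Hk.
    apply (f_equal (fun x => x * / (Cexp w * Cexp w))) in H1.
    replace (Cexp (RtoC (-2 * INR 1) * w)) with (1 * / (Cexp w * Cexp w))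
      by (rewrite <- H1; field; auto).
    field; repeat split; auto using two_neq0.
  - assert (IH' := IH ltac:(lia)).
    apply functional_extensionality. intro w.
    change (iterD2 (S (S n)) U w) with (coord_deriv (fun v => Cexp v * Cexp v) (iterD2 (S n) U) w).
    rewrite IH'.
    rewrite (coord_deriv_CD _ w _ (Fn_CD a0 U V HU HV (S n) w)).
    destruct (ABC_rec (S n) ltac:(lia)) as [RA [RB RC]].
    unfold FnI, Fnd. rewrite RA, RB, RC.
    rewrite !peval_padd, !peval_pscale, !peval_pX.
    assert (H1 := Cexp_shift2 (S n) w).
    assert (Hz := Cexp_neq0 w).
    assert (HE : Cexp (RtoC (-2 * INR (S (S n))) * w) = Cexp (RtoC (-2 * INR (S n)) * w) / (Cexp w * Cexp w)).
    { rewrite <- H1. field. auto. }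
    rewrite HE.
    replace (RtoC (/ 2 ^ S (S n))) with (RtoC (/ 2 ^ S n) / RtoC 2).
    2:{ rewrite <- RtoC_div. f_equal. simpl pow. field. pose proof (pow_lt 2 n). lra. lra. }
    field; repeat split; auto using two_neq0.
Qed.

Close Scope C_scope. Open Scope R_scope.
Open Scope R_scope.

Definition sg (m : Z) : R := powerRZ (-1) m.

Lemma powerRZ_nat x n : powerRZ x (Z.of_nat n) = x ^ n.
Proof.
  destruct n. reflexivity. simpl. rewrite SuccNat2Pos.id_succ. reflexivity.
Qed.

Lemma m1pow_sq n : (-1) ^ n * (-1) ^ n = 1.
Proof. rewrite <- Rpow_mult_distr. replace (-1 * -1) with 1 by ring. apply pow1. Qed.

Lemma pow_m1_pm n : (-1) ^ n = 1 \/ (-1) ^ n = -1.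
Proof. induction n. simpl; auto. simpl. destruct IHn as [H|H]; rewrite H; [right|left]; ring. Qed.

Lemma sg_pm m : sg m = 1 \/ sg m = -1.
Proof.
  unfold sg. destruct m; simpl. auto. apply pow_m1_pm.
  destruct (pow_m1_pm (Pos.to_nat p)) as [H|H]; rewrite H; [left|right]; field.
Qed.

Lemma sg_sq m : sg m * sg m = 1.
Proof. destruct (sg_pm m) as [H|H]; rewrite H; ring. Qed.

Lemma trig_nat n : cos (INR n * PI) = (-1) ^ n /\ sin (INR n * PI) = 0.
Proof.
  induction n. simpl. rewrite Rmult_0_l, cos_0, sin_0. auto.
  rewrite S_INR. replace ((INR n + 1) * PI) with (INR n * PI + PI) by ring.
  rewrite neg_cos, neg_sin. destruct IHn as [H1 H2]. rewrite H1, H2. split; simpl; ring.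
Qed.

Lemma trig_m m : cos (IZR m * PI) = sg m /\ sin (IZR m * PI) = 0.
Proof.
  unfold sg. destruct m.
  - simpl. rewrite Rmult_0_l, cos_0, sin_0. auto.
  - rewrite <- positive_nat_Z, <- INR_IZR_INZ, powerRZ_nat. apply trig_nat.
  - replace (IZR (Z.neg p)) with (- INR (Pos.to_nat p)).
    2:{ rewrite INR_IZR_INZ, positive_nat_Z. reflexivity. }
    replace (- INR (Pos.to_nat p) * PI) with (- (INR (Pos.to_nat p) * PI)) by ring.
    rewrite cos_neg, sin_neg. destruct (trig_nat (Pos.to_nat p)) as [H1 H2]. rewrite H1, H2.
    simpl. split. 2: ring.
    assert (H := m1pow_sq (Pos.to_nat p)).
    assert ((-1) ^ Pos.to_nat p <> 0) by (intro H0; rewrite H0 in H; lra).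
    field_simplify_eq; auto. lra.
Qed.

Lemma sg_mul m n : powerRZ (-1) (m * Z.of_nat n) = sg m ^ n.
Proof.
  unfold sg. induction n. simpl. rewrite Z.mul_0_r. reflexivity.
  rewrite Nat2Z.inj_succ. replace (m * Z.succ (Z.of_nat n))%Z with (m * Z.of_nat n + m)%Z by lia.
  rewrite powerRZ_add by lra. rewrite IHn. simpl. ring.
Qed.

Lemma sg_mul1 m n : powerRZ (-1) ((m + 1) * Z.of_nat n) = (-1) ^ n * sg m ^ n.
Proof.
  replace ((m + 1) * Z.of_nat n)%Z with (m * Z.of_nat n + Z.of_nat n)%Z by lia.
  rewrite powerRZ_add by lra. rewrite sg_mul, powerRZ_nat. ring.
Qed.

Open Scope C_scope.

Lemma Cexp_shift_m (m : Z) (w : C) : Cexp (Cminus w (Cmult (RtoC (IZR m * PI)) Ci)) = RtoC (sg m) * Cexp w.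
Proof.
  unfold Cminus. rewrite Cexp_add.
  replace (Cexp (- (RtoC (IZR m * PI) * Ci))) with (RtoC (sg m)).
  ring.
  destruct (trig_m m) as [H1 H2].
  unfold Cexp, RtoC, Ci, Cmult, Copp. simpl.
  replace (- (IZR m * PI * 0 - 0 * 1))%R with 0%R by ring.
  replace (- (IZR m * PI * 1 + 0 * 0))%R with (- (IZR m * PI))%R by ring.
  rewrite cos_neg, sin_neg, H1, H2, exp_0.
  apply injective_projections; simpl; ring.
Qed.

Close Scope C_scope. Open Scope R_scope.
Open Scope C_scope.

Definition KpF (m : Z) : R := - IZR m * PI ^ 2 * (IZR m + 1) / 4.
Definition KmF (m : Z) : R := - IZR m * PI ^ 2 * (IZR m - 1) / 4.
Definition sft (m : Z) : C := Copp (Cmult (RtoC (IZR m * PI)) Ci).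
Definition Gf (m : Z) (u : C) : C := Cmult (RtoC (KpF m)) (H1_0 u) + Cmult (RtoC (KmF m)) (H2_0 u).
Definition VGf (m : Z) (u : C) : C := - (Cexp u * (Cmult (RtoC (KpF m)) (H1_1 u) + Cmult (RtoC (KmF m)) (H2_1 u))).

Lemma Cexp_sft m u : Cexp (u + sft m) = RtoC (sg m) * Cexp u.
Proof. apply (Cexp_shift_m m u). Qed.

Lemma sg_C_sq m : RtoC (sg m) * RtoC (sg m) = 1.
Proof. rewrite <- RtoC_mult, sg_sq. reflexivity. Qed.

Lemma c2_sft m v : Cexp (v + sft m) * Cexp (v + sft m) = Cexp v * Cexp v.
Proof.
  rewrite Cexp_sft. transitivity (RtoC (sg m) * RtoC (sg m) * (Cexp v * Cexp v)). ring.
  rewrite sg_C_sq. ring.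
Qed.

Lemma q_sft m v : q (v + sft m) = q v.
Proof.
  unfold q. rewrite Cexp_sft.
  transitivity (RtoC (sg m) * RtoC (sg m) * (Cexp v / RtoC 2 * (Cexp v / RtoC 2))). field.
  rewrite sg_C_sq. ring.
Qed.

Lemma RtoC_PI_neq0 : RtoC PI <> 0.
Proof. intro H. apply RtoC_inj in H. apply PI_neq0. auto. Qed.

Lemma S10_shift m u : S10 (u + sft m) = S10 u + Gf m u.
Proof.
  rewrite !S10_rep. rewrite q_sft. unfold Gf, H1_0, H2_0. rewrite J0_rep, Y0_rep.
  set (A := CEr j0r (q u)). set (P := CEr phr (q u)). set (S := CEr sgr (q u)).
  set (L := u - RtoC (ln 2)).
  replace (u + sft m - RtoC (ln 2)) with (L + sft m) by (unfold L; ring).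
  set (s := sft m).
  transitivity (RtoC (1 / 2) * (L * L * A - RtoC 2 * L * P + S) + (s * L * A - s * P) + RtoC (1/2) * (s * s) * A).
  { replace (RtoC (1 / 2)) with (/ RtoC 2) by (rewrite <- RtoC_inv by lra; f_equal; field).
    field; apply two_neq0. }
  assert (Hs : s * s = - (RtoC (IZR m) * RtoC (IZR m) * RtoC PI * RtoC PI)).
  { unfold s, sft. apply injective_projections; simpl; ring. }
  rewrite Hs. unfold s, sft.
  replace (RtoC (IZR m * PI)) with (RtoC (IZR m) * RtoC PI) by (rewrite RtoC_mult; reflexivity).
  replace (RtoC (KpF m)) with (- (RtoC (IZR m) * RtoC PI * RtoC PI * (RtoC (IZR m) + 1)) / RtoC 4)
    by (unfold KpF; apply injective_projections; simpl; field).
  replace (RtoC (KmF m)) with (- (RtoC (IZR m) * RtoC PI * RtoC PI * (RtoC (IZR m) - 1)) / RtoC 4)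
    by (unfold KmF; apply injective_projections; simpl; field).
  replace (RtoC (2 / PI)) with (RtoC 2 / RtoC PI) by (rewrite RtoC_div; auto; apply PI_neq0).
  replace (RtoC (1 / 2)) with (/ RtoC 2) by (rewrite <- RtoC_inv by lra; f_equal; field).
  field; repeat split; try apply RtoC_PI_neq0; intro H; apply RtoC_inj in H; lra.
Qed.

Lemma Gf_CD m w : CD (Gf m) w (VGf m w).
Proof.
  unfold Gf, H1_0, H2_0. eapply CD_eq.
  apply (CD_plus (fun t => RtoC (KpF m) * (J0 t + Ci * Y0 t))).
  apply CD_scal. apply (CD_plus J0). apply D_J0. apply CD_scal. apply D_Y0.
  apply CD_scal. apply (CD_minus J0). apply D_J0. apply CD_scal. apply D_Y0.
  unfold VGf, H1_1, H2_1. ring.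
Qed.

Lemma VGf_CD m w : CD (VGf m) w (RtoC 0 - Cexp w * Cexp w * Gf m w).
Proof.
  apply CD_ext with (fun t => - (RtoC (KpF m) * (Cexp t * J1 t + Ci * (Cexp t * Y1 t))
     + RtoC (KmF m) * (Cexp t * J1 t - Ci * (Cexp t * Y1 t)))).
  intro t. unfold VGf, H1_1, H2_1. ring.
  eapply CD_eq. apply CD_opp.
  apply (CD_plus (fun t => RtoC (KpF m) * (Cexp t * J1 t + Ci * (Cexp t * Y1 t)))).
  apply CD_scal. apply (CD_plus (fun t => Cexp t * J1 t)). apply D_ZJ1. apply CD_scal. apply D_ZY1.
  apply CD_scal. apply (CD_minus (fun t => Cexp t * J1 t)). apply D_ZJ1. apply CD_scal. apply D_ZY1.
  unfold Gf, H1_0, H2_0. ring.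
Qed.

Lemma smooth_of a0 U V (HU : forall w, CD U w (V w)) (HV : forall w, CD V w (RtoC a0 - Cexp w * Cexp w * U w)) :
  Smooth U.
Proof.
  assert (Hnz : forall w, RtoC 2 * (Cexp w * Cexp w) <> 0).
  { intro w. apply Cmult_neq_0. apply two_neq0. apply Cmult_neq_0; apply Cexp_neq0. }
  intros k w. destruct k as [|k].
  - eexists. simpl. apply hcd_of_CD. apply HU. apply (c2_CD w). auto.
  - rewrite (iter_formula a0 U V HU HV (S k)) by lia.
    eexists. apply hcd_of_CD. apply Fn_CD; auto. apply (c2_CD w). auto.
Qed.

Lemma Cpown_mult a b n : Cpown (a * b) n = Cpown a n * Cpown b n.
Proof. induction n; simpl. ring. rewrite IHn. ring. Qed.

Lemma Cpown_RtoC x n : Cpown (RtoC x) n = RtoC (x ^ n).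
Proof. induction n; simpl. reflexivity. rewrite IHn, RtoC_mult. reflexivity. Qed.

Lemma Cpown_Cexp' n w : Cpown (Cexp w) n = Cexp (RtoC (INR n) * w).
Proof.
  induction n. simpl. replace (RtoC 0 * w) with (RtoC 0) by ring. rewrite Cexp_0. reflexivity.
  simpl Cpown. rewrite IHn, <- Cexp_add. f_equal. rewrite S_INR, RtoC_plus. ring.
Qed.

Lemma Cpown_neq0 (z : C) n : z <> 0 -> Cpown z n <> 0.
Proof.
  intro H. induction n.
  - simpl. intro H1. apply (f_equal fst) in H1. simpl in H1. lra.
  - simpl. apply Cmult_neq_0; auto.
Qed.

Lemma Cexp_cancel n w : Cexp (RtoC (-2 * INR n) * w) * Cpown (Cexp w) n * Cpown (Cexp w) n = 1.
Proof.
  rewrite Cpown_Cexp', <- !Cexp_add.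
  replace (RtoC (-2 * INR n) * w + RtoC (INR n) * w + RtoC (INR n) * w) with (RtoC 0).
  apply Cexp_0. rewrite RtoC_mult. ring.
Qed.

Close Scope C_scope. Open Scope R_scope.
Open Scope C_scope.

Lemma smooth_S10 : Smooth S10.
Proof. apply (smooth_of 1 S10 TT). apply D_S10. apply D_TT. Qed.

Lemma smooth_G m : Smooth (Gf m).
Proof. apply (smooth_of 0 (Gf m) (VGf m)). apply Gf_CD. apply VGf_CD. Qed.

Lemma kf_neq0 n : kf n <> 0.
Proof. unfold kf. fold (fk n). apply RtoC_fk_neq0. Qed.

Close Scope C_scope.
Open Scope R_scope.

Theorem lemma3p9 (n : nat) (m : Z) (w : C) :
  (0 < n)%nat -> - PI < Im w < PI ->
  let zeta := Cexp w in
  let delta := 1 + powerRZ (-1) (m - 1) in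
  let Kp := - IZR m * PI ^ 2 * (IZR m + 1) / 4 in
  let Km := - IZR m * PI ^ 2 * (IZR m - 1) / 4 in
  Lommel n (Cminus w (Cmult (RtoC (IZR m * PI)) Ci)) =
  Cplus
    (Cmult (RtoC (powerRZ (-1) (m * Z.of_nat n))) (Lommel n w))
    (Cmult (RtoC (powerRZ (-1) ((m + 1) * Z.of_nat n) / (2 ^ n * INR (fact n))))
      (Cmult (Cinv (Cpown zeta n))
        (Cplus
          (Cplus
            (Cmult (RtoC (- delta))
               (Cplus (Cplus (peval (phat (polyA n)) zeta)
                             (Cmult (peval (phat (polyB n)) zeta) (S10 w)))
                      (Cmult (Cmult zeta (peval (phat (polyC n)) zeta)) (dS10 w))))
            (Cmult (peval (pbar delta (polyB n)) zeta)
                   (Cplus (Cmult (RtoC Kp) (H1_0 w)) (Cmult (RtoC Km) (H2_0 w)))))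
          (Copp (Cmult (Cmult zeta (peval (pbar delta (polyC n)) zeta))
                   (Cplus (Cmult (RtoC Kp) (H1_1 w)) (Cmult (RtoC Km) (H2_1 w)))))))).
Proof.
  intros Hn Hw. cbv zeta.
  fold (KpF m). fold (KmF m).
  destruct (evenl_ABC n) as [EA [EB EC]].
  rewrite !phat_zero by auto. rewrite !pbar_eq by auto.
  unfold Lommel.
  rewrite Cexp_shift_m.
  change (Cminus w (Cmult (RtoC (IZR m * PI)) Ci)) with (Cplus w (sft m)).
  rewrite (iterD2_shift (sft m) (c2_sft m) n S10 w).
  assert (HS : (fun u => S10 (Cplus u (sft m))) = (fun u => Cplus (S10 u) (Gf m u))).
  { apply functional_extensionality; intro; apply S10_shift. }
  rewrite HS.
  rewrite (iterD2_plus S10 (Gf m) smooth_S10 (smooth_G m) n).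
  rewrite (iter_formula 0 (Gf m) (VGf m) (Gf_CD m) (VGf_CD m) n Hn).
  unfold FnI, Gf, VGf.
  rewrite Cpown_mult, Cpown_RtoC, sg_mul, sg_mul1.
  assert (Hz := Cexp_neq0 w).
  assert (Hp := Cpown_neq0 (Cexp w) n Hz).
  assert (Hk := kf_neq0 n).
  assert (HE : Cexp (RtoC (-2 * INR n) * w) = Cinv (Cmult (Cpown (Cexp w) n) (Cpown (Cexp w) n))).
  { assert (H := Cexp_cancel n w).
    transitivity (Cmult (Cmult (Cmult (Cexp (RtoC (-2 * INR n) * w)) (Cpown (Cexp w) n)) (Cpown (Cexp w) n))
       (Cinv (Cmult (Cpown (Cexp w) n) (Cpown (Cexp w) n)))).
    field. auto. rewrite H. ring. }
  rewrite HE.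
  assert (H2 : 2 ^ n <> 0) by (apply pow_nonzero; lra).
  assert (Hf : INR (fact n) <> 0) by (pose proof (fact_pos n); lra).
  replace (RtoC ((-1) ^ n * sg m ^ n / (2 ^ n * INR (fact n))))
    with (Cdiv (Cmult (Cmult (RtoC ((-1) ^ n)) (RtoC (sg m ^ n))) (RtoC (/ 2 ^ n))) (kf n)).
  2:{ unfold kf. rewrite <- !RtoC_mult, <- RtoC_div by auto. f_equal. field. auto. }
  set (X := iterD2 n S10 w).
  field. auto.
Qed.
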